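(* Let $\mathscr T$ be a leafless, locally finite rooted directed tree of finite branching index, $q\geqslant1$ real, $S_{\lambda,q}$ the Dirichlet shift on $\mathscr T$, and $S_{w,q}$ the classical Dirichlet shift. Then $S_{\lambda,q}$ is unitarily equivalent to some finite orthogonal direct sum of copies of $S_{w,q}$ if and only if either $q=1$ or $\mathscr T$ is isomorphic to $\mathbb N$.
   Context: A directed tree $\mathscr T=(V,\mathcal E)$ is a directed graph with no circuits, connected, in which every non-root vertex has a unique parent; rooted means a unique vertex $\mathsf{root}$ has no parent. $\mathsf{Chi}(v)=\{u:(v,u)\in\mathcal E\}$; $\mathsf{Chi}^{\langle n\rangle}$ is the $n$-fold iterate. Locally finite: each $\mathsf{Chi}(v)$ finite; leafless: each $\mathsf{Chi}(v)$ nonempty; $V$ countably infinite. Depth $n_v$: the unique $n$ with $v\in\mathsf{Chi}^{\langle n\rangle}(\mathsf{root})$. Branching vertices $V_\prec=\{v:\mathrm{card}(\mathsf{Chi}(v))\geqslant2\}$; branching index $k_{\mathscr T}=1+\sup\{n_w:w\in V_\prec\}$ if $V_\prec\ne\emptyset$, else $0$; finite branching index means $k_{\mathscr T}<\infty$. $\mathscr T$ is isomorphic to $\mathbb N$ if there is an edge-preserving bijection onto the tree with vertices $\mathbb N$ and edges $(n,n+1)$ (equivalently $V_\prec=\emptyset$). The weighted shift on $\ell^2(V)$ with weights $\{\lambda_u\}$ is $S_\lambda e_v=\sum_{u\in\mathsf{Chi}(v)}\lambda_ue_u$. The Dirichlet shift $S_{\lambda,q}$ has weights $\lambda_{u,q}=\frac{1}{\sqrt{\mathrm{card}(\mathsf{Chi}(v))}}\sqrt{\frac{n_v+q}{n_v+1}}$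 for $u\in\mathsf{Chi}(v)$. The classical Dirichlet shift $S_{w,q}$ is the operator on $\ell^2(\mathbb N)$ given by $S_{w,q}e_n=\sqrt{\frac{n+q}{n+1}}\,e_{n+1}$. *)

(* Defs.v *)
From Stdlib Require Import Reals List Relations ClassicalEpsilon.
Open Scope R_scope.
Set Implicit Arguments.

Definition C : Type := (R * R)%type.
Definition C0 : C := (0, 0).
Definition RtoC (r : R) : C := (r, 0).
Definition Cadd (a b : C) : C := (fst a + fst b, snd a + snd b).
Definition Cmul (a b : C) : C :=
  (fst a * fst b - snd a * snd b, fst a * snd b + snd a * fst b).
Definition Cnorm2 (a : C) : R := fst a * fst a + snd a * snd a.

Definition sqsum {X : Type} (f : X -> C) (l : list X) : R :=
  fold_right (fun x acc => Cnorm2 (f x) + acc) 0 l.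

Definition in_l2 {X : Type} (f : X -> C) : Prop :=
  exists M : R, forall l : list X, NoDup l -> sqsum f l <= M.

Definition l2_sqnorm {X : Type} (f : X -> C) (s : R) : Prop :=
  is_lub (fun x => exists l : list X, NoDup l /\ x = sqsum f l) s.

(* U : l^2(X) -> l^2(Y) is unitary: maps l^2 into l^2, C-linear,
   norm preserving (hence inner-product preserving), and onto. *)
Definition is_unitary {X Y : Type} (U : (X -> C) -> (Y -> C)) : Prop :=
  (forall f, in_l2 f -> in_l2 (U f)) /\
  (forall (a : C) (f g : X -> C), in_l2 f -> in_l2 g ->
     forall y, U (fun x => Cadd (Cmul a (f x)) (g x)) y
               = Cadd (Cmul a (U f y)) (U g y)) /\
  (forall f s, in_l2 f -> l2_sqnorm f s -> l2_sqnorm (U f) s) /\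
  (forall g : Y -> C, in_l2 g -> exists f, in_l2 f /\ forall y, U f y = g y).

Definition unitarily_equivalent {X Y : Type}
  (A : (X -> C) -> (X -> C)) (B : (Y -> C) -> (Y -> C)) : Prop :=
  exists U : (X -> C) -> (Y -> C),
    is_unitary U /\ forall f, in_l2 f -> forall y, U (A f) y = B (U f) y.

(* E v u means (v,u) is an edge, i.e. u is a child of v. *)
Definition rooted_directed_tree {V : Type} (E : V -> V -> Prop) (root : V) : Prop :=
  (forall v, ~ clos_trans V E v v) /\
  (forall u v, clos_refl_sym_trans V E u v) /\
  (forall v, ~ E v root) /\
  (forall u, u <> root -> exists! v, E v u).

Definition locally_finite {V : Type} (E : V -> V -> Prop) : Prop :=
  forall v, exists l : list V, forall u, E v u <-> In u l.

Definition leafless {V : Type} (E : V -> V -> Prop) : Prop :=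
  forall v, exists u, E v u.

Definition countably_infinite (V : Type) : Prop :=
  exists e : nat -> V, (forall m n, e m = e n -> m = n) /\ (forall v, exists n, e n = v).

Definition chi_card {V : Type} (E : V -> V -> Prop) (v : V) (k : nat) : Prop :=
  exists l : list V, NoDup l /\ (forall u, E v u <-> In u l) /\ length l = k.

Inductive depth {V : Type} (E : V -> V -> Prop) (root : V) : V -> nat -> Prop :=
  | depth_root : depth E root root 0
  | depth_step : forall v u n, depth E root v n -> E v u -> depth E root u (S n).

Definition branching {V : Type} (E : V -> V -> Prop) (v : V) : Prop :=
  exists k, chi_card E v k /\ (2 <= k)%nat.

Definition finite_branching_index {V : Type} (E : V -> V -> Prop) (root : V) : Prop :=
  exists N : nat, forall v n, branching E v -> depth E root v n -> (n <= N)%nat.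

Definition iso_to_nat {V : Type} (E : V -> V -> Prop) : Prop :=
  exists phi : V -> nat,
    (forall u v, phi u = phi v -> u = v) /\ (forall n, exists v, phi v = n) /\
    (forall u v, E u v <-> phi v = S (phi u)).

Definition parent {V : Type} (E : V -> V -> Prop) (u : V) : option V :=
  match excluded_middle_informative (exists v, E v u) with
  | left H => Some (proj1_sig (constructive_indefinite_description _ H))
  | right _ => None
  end.

(* S_lambda e_v = sum_{u in Chi v} lambda_u e_u, i.e. (S f)(u) = lambda_u f(parent u) *)
Definition weighted_shift {V : Type} (E : V -> V -> Prop) (lam : V -> R)
  (f : V -> C) (u : V) : C :=
  match parent E u with
  | Some v => Cmul (RtoC (lam u)) (f v)
  | None => C0
  end.

Definition dirichlet_weights {V : Type} (E : V -> V -> Prop) (root : V) (q : R)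
  (lam : V -> R) : Prop :=
  forall v u n k, E v u -> depth E root v n -> chi_card E v k ->
    lam u = / sqrt (INR k) * sqrt ((INR n + q) / (INR n + 1)).

Definition classical_dirichlet (q : R) (g : nat -> C) (n : nat) : C :=
  match n with
  | O => C0
  | S k => Cmul (RtoC (sqrt ((INR k + q) / (INR k + 1)))) (g k)
  end.

(* orthogonal direct sum of m copies of A on l^2(N), realised on
   l^2({0..m-1} x N) = (+)_{i<m} l^2(N), acting componentwise *)
Definition direct_sum (m : nat) (A : (nat -> C) -> (nat -> C))
  (g : ({i : nat | (i < m)%nat} * nat)%type -> C)
  (p : ({i : nat | (i < m)%nat} * nat)%type) : C :=
  A (fun k => g (fst p, k)) (snd p).
Arguments direct_sum m A g p : clear implicits.

(* Main.v *)
Require Import Defs.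
From Stdlib Require Import Reals List Relations.
Open Scope R_scope.

From Stdlib Require Import Lra Lia Psatz ClassicalEpsilon FunctionalExtensionality ProofIrrelevance Arith FinFun.
Require Import Defs.
Open Scope R_scope.


Definition dec (P : Prop) : {P} + {~P} := excluded_middle_informative P.

Definition rsum {X : Type} (F : X -> R) (l : list X) : R :=
  fold_right (fun x acc => F x + acc) 0 l.

Lemma sqsum_rsum {X : Type} (f : X -> C) l :
  sqsum f l = rsum (fun x => Cnorm2 (f x)) l.
Proof. reflexivity. Qed.

Lemma rsum_nil {X} (F : X -> R) : rsum F nil = 0.
Proof. reflexivity. Qed.
Lemma rsum_cons {X} (F : X -> R) a l : rsum F (a :: l) = F a + rsum F l.
Proof. reflexivity. Qed.

Lemma rsum_app {X} (F : X -> R) l1 l2 : rsum F (l1 ++ l2) = rsum F l1 + rsum F l2.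
Proof. induction l1; simpl. lra. unfold rsum in *; simpl in *. rewrite IHl1. lra. Qed.

Lemma rsum_plus {X} (F G : X -> R) l :
  rsum (fun x => F x + G x) l = rsum F l + rsum G l.
Proof. induction l; unfold rsum in *; simpl in *. lra. rewrite IHl. lra. Qed.

Lemma rsum_minus {X} (F G : X -> R) l :
  rsum (fun x => F x - G x) l = rsum F l - rsum G l.
Proof. induction l; unfold rsum in *; simpl in *. lra. rewrite IHl. lra. Qed.

Lemma rsum_scal_l {X} (c : R) (F : X -> R) l :
  rsum (fun x => c * F x) l = c * rsum F l.
Proof. induction l; unfold rsum in *; simpl in *. lra. rewrite IHl. lra. Qed.

Lemma rsum_scal_r {X} (c : R) (F : X -> R) l :
  rsum (fun x => F x * c) l = rsum F l * c.
Proof. induction l; unfold rsum in *; simpl in *. lra. rewrite IHl. lra. Qed.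

Lemma rsum_ext_in {X} (F G : X -> R) l :
  (forall x, In x l -> F x = G x) -> rsum F l = rsum G l.
Proof.
  induction l; intros H; unfold rsum in *; simpl in *. reflexivity.
  rewrite H by auto. rewrite IHl by auto. reflexivity.
Qed.

Lemma rsum_ext {X} (F G : X -> R) l :
  (forall x, F x = G x) -> rsum F l = rsum G l.
Proof. intros; apply rsum_ext_in; auto. Qed.

Lemma rsum_zero {X} (F : X -> R) l : (forall x, In x l -> F x = 0) -> rsum F l = 0.
Proof.
  intros H. transitivity (rsum (fun _ : X => 0) l). apply rsum_ext_in; auto.
  induction l; unfold rsum in *; simpl in *; auto. rewrite IHl; auto. lra. 
Qed.

Lemma rsum_nonneg {X} (F : X -> R) l : (forall x, In x l -> 0 <= F x) -> 0 <= rsum F l.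
Proof.
  induction l; intros H; unfold rsum in *; simpl in *. lra.
  assert (0 <= F a) by auto. assert (0 <= fold_right (fun x acc => F x + acc) 0 l) by auto. lra.
Qed.

Lemma rsum_le {X} (F G : X -> R) l : (forall x, In x l -> F x <= G x) -> rsum F l <= rsum G l.
Proof.
  induction l; intros H; unfold rsum in *; simpl in *. lra.
  assert (F a <= G a) by auto.
  assert (fold_right (fun x acc => F x + acc) 0 l <= fold_right (fun x acc => G x + acc) 0 l) by auto. lra.
Qed.

Lemma rsum_concat_map {A B} (F : B -> R) (g : A -> list B) l :
  rsum F (concat (map g l)) = rsum (fun a => rsum F (g a)) l.
Proof.
  induction l; simpl. reflexivity. rewrite rsum_app, IHl. reflexivity.
Qed.

Lemma rsum_map {A B} (F : B -> R) (g : A -> B) l :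
  rsum F (map g l) = rsum (fun a => F (g a)) l.
Proof. induction l; unfold rsum in *; simpl in *; auto. rewrite IHl; auto. Qed.

Lemma rsum_swap {A B} (F : A -> B -> R) l1 l2 :
  rsum (fun a => rsum (F a) l2) l1 = rsum (fun b => rsum (fun a => F a b) l1) l2.
Proof.
  induction l1; simpl.
  - rewrite rsum_zero; auto.
  - change (rsum (fun a0 => rsum (F a0) l2) (a :: l1)) with (rsum (F a) l2 + rsum (fun a0 => rsum (F a0) l2) l1).
    rewrite IHl1. rewrite <- rsum_plus. apply rsum_ext. intros; reflexivity.
Qed.

Lemma rsum_sq {X} (F : X -> R) l :
  (rsum F l) * (rsum F l) = rsum (fun x => rsum (fun y => F x * F y) l) l.
Proof.
  rewrite <- rsum_scal_r. apply rsum_ext. intros x. rewrite rsum_scal_l. reflexivity.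
Qed.

Fixpoint rem {X : Type} (a : X) (l : list X) : list X :=
  match l with
  | nil => nil
  | b :: r => if dec (a = b) then r else b :: rem a r
  end.

Lemma rsum_rem {X} (F : X -> R) a l : In a l -> rsum F l = F a + rsum F (rem a l).
Proof.
  induction l; intros H. contradiction.
  change (rem a (a0 :: l)) with (if dec (a = a0) then l else a0 :: rem a l).
  destruct (dec (a = a0)).
  - subst. reflexivity.
  - destruct H. congruence. rewrite rsum_cons, (IHl H), rsum_cons. lra.
Qed.

Lemma in_rem {X} (a x : X) l : In x (rem a l) -> In x l.
Proof.
  induction l; simpl; auto. destruct (dec (a = a0)); simpl; intuition.
Qed.

Lemma in_rem2 {X} (a x : X) l : In x l -> x <> a -> In x (rem a l).
Proof.
  induction l; simpl; auto. intros [H|H] Hne; destruct (dec (a = a0)); simpl; subst; auto; congruence.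
Qed.

Lemma nodup_rem {X} (a : X) l : NoDup l -> NoDup (rem a l).
Proof.
  induction l; simpl; intros H; auto. inversion H; subst.
  destruct (dec (a = a0)); auto. constructor; auto.
  intros Hin. apply H2. eapply in_rem; eauto.
Qed.

Lemma rsum_incl_le {X} (F : X -> R) l1 l2 :
  (forall x, 0 <= F x) -> NoDup l1 -> NoDup l2 -> incl l1 l2 -> rsum F l1 <= rsum F l2.
Proof.
  intros HF. revert l2. induction l1; intros l2 H1 H2 Hi.
  - simpl. apply rsum_nonneg; auto.
  - inversion H1; subst. rewrite (rsum_rem F a l2) by (apply Hi; left; auto).
    rewrite rsum_cons. apply Rplus_le_compat_l. apply IHl1; auto. apply nodup_rem; auto.
    intros x Hx. apply in_rem2. apply Hi; right; auto. intro; subst; contradiction.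
Qed.

Lemma rsum_incl_eq {X} (F : X -> R) l1 l2 :
  NoDup l1 -> NoDup l2 -> incl l1 l2 -> (forall x, In x l2 -> ~ In x l1 -> F x = 0) ->
  rsum F l2 = rsum F l1.
Proof.
  revert l2. induction l1; intros l2 H1 H2 Hi HF.
  - simpl. apply rsum_zero. intros; apply HF; auto.
  - inversion H1; subst. rewrite (rsum_rem F a l2) by (apply Hi; left; auto).
    rewrite rsum_cons. f_equal. apply IHl1; auto. apply nodup_rem; auto.
    intros x Hx. apply in_rem2. apply Hi; right; auto. intro; subst; contradiction.
    intros x Hx Hn. apply HF. eapply in_rem; eauto. intros [E|E]; auto.
    subst. clear -H2 Hx. induction l2; simpl in *; auto. inversion H2; subst.
    destruct (dec (x = a)); subst; auto. destruct Hx; subst; auto.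
Qed.

Definition delta {X : Type} (x y : X) : R := if dec (x = y) then 1 else 0.

Lemma delta_refl {X} (x : X) : delta x x = 1.
Proof. unfold delta; destruct (dec (x = x)); congruence. Qed.
Lemma delta_neq {X} (x y : X) : x <> y -> delta x y = 0.
Proof. unfold delta; destruct (dec (x = y)); congruence. Qed.
Lemma delta_sym {X} (x y : X) : delta x y = delta y x.
Proof. unfold delta; destruct (dec (x = y)), (dec (y = x)); subst; congruence. Qed.

Lemma rsum_delta {X} (c : X -> R) (x : X) l :
  NoDup l -> In x l -> rsum (fun y => c y * delta x y) l = c x.
Proof.
  intros Hn Hi. rewrite (rsum_incl_eq _ (x :: nil) l).
  - simpl. rewrite delta_refl. lra.
  - constructor; auto. constructor.
  - auto.
  - intros z [E|[]]; subst; auto.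
  - intros z _ Hz. rewrite delta_neq. lra. intro; subst; apply Hz; left; auto.
Qed.

Lemma NoDup_concat_map {A B} (g : A -> list B) l :
  NoDup l -> (forall a, In a l -> NoDup (g a)) ->
  (forall a a' b, In a l -> In a' l -> In b (g a) -> In b (g a') -> a = a') ->
  NoDup (concat (map g l)).
Proof.
  induction l; intros Hl Hg Hd; simpl. constructor.
  inversion Hl; subst. apply NoDup_app; auto.
  - apply Hg; left; auto.
  - apply IHl; auto. intros; apply Hg; right; auto. intros; eapply Hd; eauto; right; auto.
  - intros b Hb Hb'. apply in_concat in Hb'. destruct Hb' as [x [Hx Hbx]].
    apply in_map_iff in Hx. destruct Hx as [a' [E Ha']]. subst.
    assert (a = a') by (eapply Hd; eauto; [left; auto | right; auto]). subst. contradiction.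
Qed.

Lemma in_concat_map {A B} (g : A -> list B) l b :
  In b (concat (map g l)) <-> exists a, In a l /\ In b (g a).
Proof.
  rewrite in_concat. split.
  - intros [x [Hx Hb]]. apply in_map_iff in Hx. destruct Hx as [a [E Ha]]. subst. eauto.
  - intros [a [Ha Hb]]. exists (g a). split; auto. apply in_map; auto.
Qed.

Lemma Cnorm2_nonneg (a : C) : 0 <= Cnorm2 a.
Proof. unfold Cnorm2. nra. Qed.

Lemma Cnorm2_zero (a : C) : Cnorm2 a = 0 -> a = C0.
Proof. destruct a as [x y]; unfold Cnorm2, C0; simpl. intros. f_equal; nra. Qed.

Lemma Cnorm2_le0 (a : C) : Cnorm2 a <= 0 -> a = C0.
Proof. intros; apply Cnorm2_zero. pose proof (Cnorm2_nonneg a). lra. Qed.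

Lemma pair_eq (a b : C) : fst a = fst b -> snd a = snd b -> a = b.
Proof. destruct a, b; simpl; intros; subst; auto. Qed.

Definition is_levels {Z : Type} (lz : Z -> nat) (LZ : nat -> list Z) : Prop :=
  (forall t, NoDup (LZ t)) /\ (forall t z, In z (LZ t) <-> lz z = t).

Definition pref {Z : Type} (LZ : nat -> list Z) (T : nat) : list Z := concat (map LZ (seq 0 T)).

Lemma in_pref {Z} lz (LZ : nat -> list Z) T z :
  is_levels lz LZ -> (In z (pref LZ T) <-> (lz z < T)%nat).
Proof.
  intros [_ H]. unfold pref. rewrite in_concat_map. split.
  - intros [t [Ht Hz]]. apply in_seq in Ht. apply H in Hz. lia.
  - intros Hl. exists (lz z). split. apply in_seq; lia. apply H; auto.
Qed.

Lemma pref_nodup {Z} lz (LZ : nat -> list Z) T : is_levels lz LZ -> NoDup (pref LZ T).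
Proof.
  intros [H1 H2]. unfold pref. apply NoDup_concat_map; auto. apply seq_NoDup.
  intros a a' b _ _ Ha Hb. apply H2 in Ha. apply H2 in Hb. congruence.
Qed.

Lemma rsum_pref {Z} (F : Z -> R) LZ T : rsum F (pref LZ T) = rsum (fun t => rsum F (LZ t)) (seq 0 T).
Proof. unfold pref. apply rsum_concat_map. Qed.

Lemma bound_list {Z} (lz : Z -> nat) (l : list Z) : exists T, forall z, In z l -> (lz z < T)%nat.
Proof.
  induction l. exists O; simpl; tauto.
  destruct IHl as [T HT]. exists (S (Nat.max T (lz a))). intros z [E|E]. subst; lia.
  specialize (HT z E); lia.
Qed.

Lemma sqsum_le_pref {Z} lz (LZ : nat -> list Z) (f : Z -> C) l :
  is_levels lz LZ -> NoDup l -> exists T, sqsum f l <= sqsum f (pref LZ T).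
Proof.
  intros HL Hn. destruct (bound_list lz l) as [T HT]. exists T.
  rewrite !sqsum_rsum. apply rsum_incl_le; auto. intros; apply Cnorm2_nonneg.
  eapply pref_nodup; eauto. intros z Hz. apply (in_pref lz); auto.
Qed.

Lemma sqsum_pref_mono {Z} lz (LZ : nat -> list Z) (f : Z -> C) T T' :
  is_levels lz LZ -> (T <= T')%nat -> sqsum f (pref LZ T) <= sqsum f (pref LZ T').
Proof.
  intros HL HT. rewrite !sqsum_rsum. apply rsum_incl_le; try (eapply pref_nodup; eauto).
  intros; apply Cnorm2_nonneg. intros z Hz. apply (in_pref lz) in Hz; auto. apply (in_pref lz); auto. lia.
Qed.

Definition Uop {X Y : Type} (LX : nat -> list X) (ly : Y -> nat) (K : Y -> X -> R)
  (f : X -> C) (y : Y) : C :=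
  (rsum (fun x => K y x * fst (f x)) (LX (ly y)), rsum (fun x => K y x * snd (f x)) (LX (ly y))).

Lemma parseval_real {X Y} (K : Y -> X -> R) (a : X -> R) LXt LYt :
  NoDup LXt ->
  (forall x x', In x LXt -> In x' LXt -> rsum (fun y => K y x * K y x') LYt = delta x x') ->
  rsum (fun y => rsum (fun x => K y x * a x) LXt * rsum (fun x => K y x * a x) LXt) LYt
  = rsum (fun x => a x * a x) LXt.
Proof.
  intros Hn Hc.
  rewrite (rsum_ext _ (fun y => rsum (fun x => rsum (fun x' => (K y x * a x) * (K y x' * a x')) LXt) LXt))
    by (intros; apply rsum_sq).
  rewrite rsum_swap.
  apply rsum_ext_in. intros x Hx.
  rewrite rsum_swap.
  rewrite (rsum_ext_in _ (fun x' => (a x * a x') * delta x x')).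
  - apply (rsum_delta (fun x' => a x * a x')); auto.
  - intros x' Hx'. rewrite <- (Hc x x'); auto. rewrite <- rsum_scal_l. apply rsum_ext. intros; ring.
Qed.

Lemma sqsum_level {X Y} lx (LX : nat -> list X) ly (LY : nat -> list Y) K f t :
  is_levels lx LX -> is_levels ly LY ->
  (forall t x x', In x (LX t) -> In x' (LX t) -> rsum (fun y => K y x * K y x') (LY t) = delta x x') ->
  sqsum (Uop LX ly K f) (LY t) = sqsum f (LX t).
Proof.
  intros [HX1 HX2] [HY1 HY2] Hc. rewrite !sqsum_rsum.
  rewrite (rsum_ext_in _ (fun y => rsum (fun x => K y x * fst (f x)) (LX t) * rsum (fun x => K y x * fst (f x)) (LX t)
    + rsum (fun x => K y x * snd (f x)) (LX t) * rsum (fun x => K y x * snd (f x)) (LX t))).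
  - rewrite rsum_plus. rewrite !parseval_real; auto. rewrite <- rsum_plus. apply rsum_ext. intros; reflexivity.
  - intros y Hy. apply HY2 in Hy. unfold Uop, Cnorm2. rewrite Hy. reflexivity.
Qed.

Lemma sqsum_pref_U {X Y} lx (LX : nat -> list X) ly (LY : nat -> list Y) K f T :
  is_levels lx LX -> is_levels ly LY ->
  (forall t x x', In x (LX t) -> In x' (LX t) -> rsum (fun y => K y x * K y x') (LY t) = delta x x') ->
  sqsum (Uop LX ly K f) (pref LY T) = sqsum f (pref LX T).
Proof.
  intros. rewrite !sqsum_rsum, !rsum_pref. apply rsum_ext. intros t. rewrite <- !sqsum_rsum.
  eapply sqsum_level; eauto.
Qed.

Lemma U_l2 {X Y} lx (LX : nat -> list X) ly (LY : nat -> list Y) K :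
  is_levels lx LX -> is_levels ly LY ->
  (forall t x x', In x (LX t) -> In x' (LX t) -> rsum (fun y => K y x * K y x') (LY t) = delta x x') ->
  (forall f, in_l2 f -> in_l2 (Uop LX ly K f)) /\
  (forall f s, in_l2 f -> l2_sqnorm f s -> l2_sqnorm (Uop LX ly K f) s).
Proof.
  intros HX HY Hc. split.
  - intros f [M HM]. exists M. intros l Hl. destruct (sqsum_le_pref ly LY (Uop LX ly K f) l HY Hl) as [T HT].
    rewrite (sqsum_pref_U lx LX ly LY) in HT; auto. specialize (HM (pref LX T) (pref_nodup lx LX T HX)). lra.
  - intros f s _ [Hub Hlub]. split.
    + intros x [l [Hl E]]. subst. destruct (sqsum_le_pref ly LY (Uop LX ly K f) l HY Hl) as [T HT].
      rewrite (sqsum_pref_U lx LX ly LY) in HT; auto.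
      assert (sqsum f (pref LX T) <= s). apply Hub. exists (pref LX T). split; auto. eapply pref_nodup; eauto. lra.
    + intros b Hb. apply Hlub. intros x [l [Hl E]]. subst.
      destruct (sqsum_le_pref lx LX f l HX Hl) as [T HT].
      rewrite <- (sqsum_pref_U lx LX ly LY K f T) in HT; auto.
      assert (sqsum (Uop LX ly K f) (pref LY T) <= b). apply Hb. exists (pref LY T). split; auto.
      eapply pref_nodup; eauto. lra.
Qed.

Lemma U_unitary {X Y} lx (LX : nat -> list X) ly (LY : nat -> list Y) K :
  is_levels lx LX -> is_levels ly LY ->
  (forall t x x', In x (LX t) -> In x' (LX t) -> rsum (fun y => K y x * K y x') (LY t) = delta x x') ->
  (forall t y y', In y (LY t) -> In y' (LY t) -> rsum (fun x => K y x * K y' x) (LX t) = delta y y') ->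
  is_unitary (Uop LX ly K).
Proof.
  intros HX HY Hc Hr.
  destruct (U_l2 lx LX ly LY K HX HY Hc) as [H1 H3].
  destruct (U_l2 ly LY lx LX (fun x y => K y x) HY HX Hr) as [H1' _].
  split; [|split; [|split]]; auto.
  - intros a f g _ _ y. unfold Uop, Cadd, Cmul. simpl. apply pair_eq; simpl.
    + rewrite <- !rsum_scal_l, <- rsum_minus, <- rsum_plus. apply rsum_ext. intros; ring.
    + rewrite <- !rsum_scal_l, <- !rsum_plus. apply rsum_ext. intros; ring.
  - intros g Hg. exists (Uop LY lx (fun x y => K y x) g). split; auto.
    intros y. destruct HX as [HX1 HX2]. destruct HY as [HY1 HY2].
    assert (Hy : In y (LY (ly y))) by (apply HY2; auto).
    unfold Uop. apply pair_eq; simpl.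
    + rewrite (rsum_ext_in _ (fun x => rsum (fun y' => K y x * K y' x * fst (g y')) (LY (ly y)))).
      rewrite rsum_swap. rewrite (rsum_ext_in _ (fun y' => fst (g y') * delta y y')).
      apply (rsum_delta (fun y' => _ (g y'))); auto.
      intros y' Hy'. rewrite <- Hr with (t := ly y); auto. rewrite <- rsum_scal_l. apply rsum_ext; intros; ring.
      intros x Hx. apply HX2 in Hx. rewrite Hx. rewrite <- rsum_scal_l. apply rsum_ext; intros; ring.
    + rewrite (rsum_ext_in _ (fun x => rsum (fun y' => K y x * K y' x * snd (g y')) (LY (ly y)))).
      rewrite rsum_swap. rewrite (rsum_ext_in _ (fun y' => snd (g y') * delta y y')).
      apply (rsum_delta (fun y' => _ (g y'))); auto.
      intros y' Hy'. rewrite <- Hr with (t := ly y); auto. rewrite <- rsum_scal_l. apply rsum_ext; intros; ring.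
      intros x Hx. apply HX2 in Hx. rewrite Hx. rewrite <- rsum_scal_l. apply rsum_ext; intros; ring.
Qed.

Lemma no_parent_root {V} (E : V -> V -> Prop) root v :
  rooted_directed_tree E root -> ~ E v root.
Proof. intros (_ & _ & H & _). apply H. Qed.

Lemma parent_unique {V} (E : V -> V -> Prop) root v v' u :
  rooted_directed_tree E root -> E v u -> E v' u -> v = v'.
Proof.
  intros HT H1 H2. destruct HT as (_ & _ & Hr & Hu).
  assert (u <> root) by (intro; subst; eapply Hr; eauto).
  destruct (Hu u H) as [w [_ Hw]]. rewrite <- (Hw v H1), <- (Hw v' H2). auto.
Qed.

Lemma depth_0 {V} (E : V -> V -> Prop) root v : depth E root v 0 -> v = root.
Proof. intros H; inversion H; auto. Qed.

Lemma depth_S {V} (E : V -> V -> Prop) root u n :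
  depth E root u (S n) -> exists v, depth E root v n /\ E v u.
Proof. intros H; inversion H; subst; eauto. Qed.

Lemma depth_unique {V} (E : V -> V -> Prop) root v n n' :
  rooted_directed_tree E root -> depth E root v n -> depth E root v n' -> n = n'.
Proof.
  intros HT H. revert n'. induction H; intros n' H'.
  - destruct n'; auto. apply depth_S in H'. destruct H' as [w [_ Hw]].
    exfalso; eapply no_parent_root; eauto.
  - destruct n'. apply depth_0 in H'. subst. exfalso; eapply no_parent_root; eauto.
    apply depth_S in H'. destruct H' as [w [Hw Ew]].
    assert (v = w) by (eapply parent_unique; eauto). subst. f_equal; auto.
Qed.

Lemma depth_exists {V} (E : V -> V -> Prop) root v :
  rooted_directed_tree E root -> exists n, depth E root v n.
Proof.
  intros HT. pose proof HT as (_ & Hc & _ & _).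
  assert (Hstep : forall a b, E a b -> ((exists n, depth E root a n) <-> (exists n, depth E root b n))).
  { intros a b Hab. split.
    - intros [n Hn]. exists (S n). econstructor; eauto.
    - intros [n Hn]. destruct n. apply depth_0 in Hn; subst. exfalso; eapply no_parent_root; eauto.
      apply depth_S in Hn. destruct Hn as [w [Hw Ew]]. exists n.
      assert (a = w) by (eapply parent_unique; eauto). subst; auto. }
  assert (Hall : forall a b, clos_refl_sym_trans V E a b ->
            ((exists n, depth E root a n) <-> (exists n, depth E root b n))).
  { intros a b Hab. induction Hab; try tauto. apply Hstep; auto. }
  apply (Hall root v (Hc root v)). exists O. constructor.
Qed.

Definition dep {V} (E : V -> V -> Prop) root (HT : rooted_directed_tree E root) (v : V) : nat :=
  proj1_sig (constructive_indefinite_description _ (depth_exists E root v HT)).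

Lemma dep_spec {V} (E : V -> V -> Prop) root HT v : depth E root v (dep E root HT v).
Proof. unfold dep. destruct (constructive_indefinite_description _ _). simpl. auto. Qed.

Lemma dep_eq {V} (E : V -> V -> Prop) root HT v n : depth E root v n -> dep E root HT v = n.
Proof. intros H. eapply depth_unique; eauto. apply dep_spec. Qed.

Lemma dep_root {V} (E : V -> V -> Prop) root HT : dep E root HT root = O.
Proof. apply dep_eq. constructor. Qed.

Lemma dep_edge {V} (E : V -> V -> Prop) root HT v u : E v u -> dep E root HT u = S (dep E root HT v).
Proof. intros H. apply dep_eq. econstructor; eauto. apply dep_spec. Qed.

Lemma dep_0 {V} (E : V -> V -> Prop) root HT v : dep E root HT v = O -> v = root.
Proof. intros H. apply (depth_0 E). rewrite <- H. apply dep_spec. Qed.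

Lemma dep_S {V} (E : V -> V -> Prop) root HT u n : dep E root HT u = S n ->
  exists v, E v u /\ dep E root HT v = n.
Proof.
  intros H. pose proof (dep_spec E root HT u) as Hd. rewrite H in Hd. apply depth_S in Hd.
  destruct Hd as [v [Hv Ev]]. exists v. split; auto. apply dep_eq; auto.
Qed.

Lemma parent_some {V} (E : V -> V -> Prop) root v u :
  rooted_directed_tree E root -> E v u -> parent E u = Some v.
Proof.
  intros HT H. unfold parent. destruct (excluded_middle_informative _) as [e|n].
  - destruct (constructive_indefinite_description _ e) as [w Hw]. simpl. f_equal. eapply parent_unique; eauto.
  - exfalso; eauto.
Qed.

Lemma parent_root {V} (E : V -> V -> Prop) root :
  rooted_directed_tree E root -> parent E root = None.
Proof.
  intros HT. unfold parent. destruct (excluded_middle_informative _) as [[w Hw]|n]; auto.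
  exfalso; eapply no_parent_root; eauto.
Qed.

Definition ch {V} (E : V -> V -> Prop) (Hlf : locally_finite E) (v : V) : list V :=
  nodup (fun x y => dec (x = y)) (proj1_sig (constructive_indefinite_description _ (Hlf v))).

Lemma ch_nodup {V} (E : V -> V -> Prop) Hlf v : NoDup (ch E Hlf v).
Proof. apply NoDup_nodup. Qed.

Lemma ch_spec {V} (E : V -> V -> Prop) Hlf v u : In u (ch E Hlf v) <-> E v u.
Proof.
  unfold ch. rewrite nodup_In. destruct (constructive_indefinite_description _ _) as [l Hl]. simpl.
  rewrite Hl. tauto.
Qed.

Lemma ch_card {V} (E : V -> V -> Prop) Hlf v : chi_card E v (length (ch E Hlf v)).
Proof. exists (ch E Hlf v). split. apply ch_nodup. split; auto. intros u; rewrite ch_spec; tauto. Qed.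

Lemma ch_len_pos {V} (E : V -> V -> Prop) Hlf v : leafless E -> (1 <= length (ch E Hlf v))%nat.
Proof.
  intros Hl. destruct (Hl v) as [u Hu]. rewrite <- (ch_spec E Hlf) in Hu.
  destruct (ch E Hlf v); simpl in *. contradiction. lia.
Qed.

Fixpoint Ld {V} (E : V -> V -> Prop) (Hlf : locally_finite E) (root : V) (t : nat) : list V :=
  match t with
  | O => root :: nil
  | S t => concat (map (ch E Hlf) (Ld E Hlf root t))
  end.

Lemma Ld_levels {V} (E : V -> V -> Prop) root HT Hlf :
  is_levels (dep E root HT) (Ld E Hlf root).
Proof.
  assert (Hin : forall t z, In z (Ld E Hlf root t) <-> dep E root HT z = t).
  { induction t; intros z; simpl.
    - split. intros [E1|[]]. subst. apply dep_root. intros H. left. symmetry. eapply dep_0; eauto.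
    - rewrite in_concat_map. split.
      + intros [v [Hv Hz]]. apply ch_spec in Hz. apply IHt in Hv. rewrite (dep_edge E root HT v z); auto.
      + intros H. destruct (dep_S E root HT z t H) as [v [Ev Hv]]. exists v. split. apply IHt; auto.
        apply ch_spec; auto. }
  split; auto. induction t; simpl.
  - constructor; auto. constructor.
  - apply NoDup_concat_map; auto. intros; apply ch_nodup.
    intros a a' b _ _ Ha Ha'. apply ch_spec in Ha. apply ch_spec in Ha'. eapply parent_unique; eauto.
Qed.

Lemma Ld_S_in {V} (E : V -> V -> Prop) Hlf root t v u :
  In v (Ld E Hlf root t) -> E v u -> In u (Ld E Hlf root (S t)).
Proof. intros Hv Hu. simpl. apply in_concat_map. exists v. split; auto. apply ch_spec; auto. Qed.

Lemma ws_child {V} (E : V -> V -> Prop) root lam f v u :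
  rooted_directed_tree E root -> E v u -> weighted_shift E lam f u = Cmul (RtoC (lam u)) (f v).
Proof. intros HT H. unfold weighted_shift. rewrite (parent_some E root v u); auto. Qed.

Lemma ws_root {V} (E : V -> V -> Prop) root lam f :
  rooted_directed_tree E root -> weighted_shift E lam f root = C0.
Proof. intros HT. unfold weighted_shift. rewrite parent_root; auto. Qed.

Lemma Cnorm2_scal (r : R) (z : C) : Cnorm2 (Cmul (RtoC r) z) = r * r * Cnorm2 z.
Proof. destruct z; unfold Cnorm2, Cmul, RtoC; simpl. ring. Qed.

Lemma Cmul_RtoC (r : R) (z : C) : Cmul (RtoC r) z = (r * fst z, r * snd z).
Proof. destruct z; unfold Cmul, RtoC; simpl. apply pair_eq; simpl; ring. Qed.

Definition cw (q : R) (n : nat) : R := (INR n + q) / (INR n + 1).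

Lemma cw_pos q n : 1 <= q -> 0 < cw q n.
Proof. intros. unfold cw. pose proof (pos_INR n). apply Rdiv_lt_0_compat; lra. Qed.

Lemma lam_child {V} (E : V -> V -> Prop) root HT Hlf q lam v u :
  dirichlet_weights E root q lam -> E v u ->
  lam u = / sqrt (INR (length (ch E Hlf v))) * sqrt (cw q (dep E root HT v)).
Proof. intros Hw Hu. unfold cw. apply (Hw v u); auto. apply dep_spec. apply ch_card. Qed.

Lemma lam_sq {V} (E : V -> V -> Prop) root HT Hlf q lam v u :
  1 <= q -> leafless E -> dirichlet_weights E root q lam -> E v u ->
  lam u * lam u = cw q (dep E root HT v) / INR (length (ch E Hlf v)).
Proof.
  intros Hq Hl Hw Hu. rewrite (lam_child E root HT Hlf q lam v u Hw Hu).
  pose proof (ch_len_pos E Hlf v Hl). assert (0 < INR (length (ch E Hlf v))) by (apply lt_0_INR; lia).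
  pose proof (cw_pos q (dep E root HT v) Hq).
  assert (Hs1 : sqrt (INR (length (ch E Hlf v))) * sqrt (INR (length (ch E Hlf v))) = INR (length (ch E Hlf v))) by (apply sqrt_sqrt; lra).
  assert (Hs2 : sqrt (cw q (dep E root HT v)) * sqrt (cw q (dep E root HT v)) = cw q (dep E root HT v)) by (apply sqrt_sqrt; lra).
  assert (0 < sqrt (INR (length (ch E Hlf v)))) by (apply sqrt_lt_R0; lra).
  set (a := sqrt (INR (length (ch E Hlf v)))) in *. set (b := sqrt (cw q (dep E root HT v))) in *.
  transitivity ((b * b) / (a * a)). field. lra. rewrite Hs1, Hs2. reflexivity.
Qed.

Lemma rsum_const {X} (c : R) (l : list X) : rsum (fun _ => c) l = INR (length l) * c.
Proof. induction l. unfold rsum; simpl; lra. rewrite rsum_cons, IHl. simpl length. rewrite S_INR. lra. Qed.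

Lemma lam_sq_sum {V} (E : V -> V -> Prop) root HT Hlf q lam v :
  1 <= q -> leafless E -> dirichlet_weights E root q lam ->
  rsum (fun u => lam u * lam u) (ch E Hlf v) = cw q (dep E root HT v).
Proof.
  intros Hq Hl Hw.
  rewrite (rsum_ext_in _ (fun _ => cw q (dep E root HT v) / INR (length (ch E Hlf v)))).
  rewrite rsum_const. pose proof (ch_len_pos E Hlf v Hl).
  assert (0 < INR (length (ch E Hlf v))) by (apply lt_0_INR; lia). field. lra.
  intros u Hu. apply ch_spec in Hu. eapply lam_sq; eauto.
Qed.

Definition i0 : {i : nat | (i < 1)%nat} := exist _ O (Nat.lt_0_succ O).

Lemma sig1_eq (i : {i : nat | (i < 1)%nat}) : i = i0.
Proof.
  destruct i as [i Hi]. unfold i0. assert (i = O) by lia. subst. f_equal. apply proof_irrelevance.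
Qed.

Lemma iso_dep {V} (E : V -> V -> Prop) root HT (phi : V -> nat) :
  (forall n, exists v, phi v = n) -> (forall u v, E u v <-> phi v = S (phi u)) ->
  forall v, dep E root HT v = phi v.
Proof.
  intros Hs He. assert (phi root = O).
  { destruct (phi root) eqn:Hr; auto. destruct (Hs n) as [w Hw].
    exfalso. apply (no_parent_root E root w HT). apply He. congruence. }
  intros v. pose proof (dep_spec E root HT v) as Hd. induction Hd. auto.
  apply He in H0. congruence.
Qed.

Lemma iso_backward {V} (E : V -> V -> Prop) root q lam
  (HT : rooted_directed_tree E root) (Hlf : locally_finite E) (Hleaf : leafless E)
  (Hq : 1 <= q) (Hlam : dirichlet_weights E root q lam) :
  iso_to_nat E ->
  exists m : nat, (1 <= m)%nat /\
     unitarily_equivalent (weighted_shift E lam) (direct_sum m (classical_dirichlet q)).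
Proof.
  intros [phi [Hi [Hs He]]]. exists 1%nat. split. lia.
  pose proof (iso_dep E root HT phi Hs He) as Hdep.
  pose proof (Ld_levels E root HT Hlf) as HL.
  set (w := fun n => proj1_sig (constructive_indefinite_description _ (Hs n))).
  assert (Hw : forall n, phi (w n) = n).
  { intros n. unfold w. destruct (constructive_indefinite_description _ _). auto. }
  assert (HLw : forall t x, In x (Ld E Hlf root t) <-> x = w t).
  { intros t x. destruct HL as [_ HL]. rewrite HL, Hdep. split. intros; apply Hi; rewrite Hw; auto.
    intros; subst; auto. }
  assert (Hsum : forall F t, rsum F (Ld E Hlf root t) = F (w t)).
  { intros F t. rewrite (rsum_incl_eq F (w t :: nil)). unfold rsum; simpl; lra.
    constructor; auto. constructor. destruct HL as [HL _]; auto.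
    intros x [E1|[]]; subst; apply HLw; auto.
    intros x Hx Hn. exfalso. apply Hn. left. symmetry; apply HLw; auto. }
  set (Y := ({i : nat | (i < 1)%nat} * nat)%type).
  set (ly := fun y : Y => snd y).
  set (LY := fun t : nat => (i0, t) :: nil : list Y).
  assert (HLY : is_levels ly LY).
  { split. intros; constructor; auto. constructor.
    intros t [i n]. unfold LY, ly; simpl. split. intros [E1|[]]. inversion E1; auto.
    intros; subst. left. rewrite (sig1_eq i); auto. }
  set (K := fun (y : Y) (x : V) => 1).
  exists (Uop (Ld E Hlf root) ly K). split.
  - apply (U_unitary (dep E root HT) _ ly LY); auto.
    + intros t x x' Hx Hx'. apply HLw in Hx. apply HLw in Hx'. subst. rewrite delta_refl.
      unfold LY, K; simpl. unfold rsum; simpl; lra.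
    + intros t y y' Hy Hy'. unfold LY in *. destruct Hy as [Hy|[]]. destruct Hy' as [Hy'|[]]. subst.
      rewrite delta_refl. rewrite Hsum. unfold K. lra.
  - intros f _ [i n]. unfold direct_sum, Uop, ly, K. simpl. rewrite !Hsum.
    destruct n as [|k]; simpl.
    + assert (w 0%nat = root). { apply (dep_0 E root HT). rewrite Hdep, Hw. auto. }
      rewrite H, ws_root; auto. unfold C0. apply pair_eq; simpl; ring.
    + assert (Ek : E (w k) (w (S k))). { apply He. rewrite !Hw. auto. }
      rewrite (ws_child E root lam f (w k) (w (S k))); auto.
      rewrite (lam_child E root HT Hlf q lam (w k) (w (S k))); auto.
      assert (Hch : length (ch E Hlf (w k)) = 1%nat).
      { assert (forall u, In u (ch E Hlf (w k)) -> u = w (S k)).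
        { intros u Hu. apply ch_spec in Hu. apply He in Hu. apply Hi. rewrite Hu, !Hw. auto. }
        pose proof (ch_nodup E Hlf (w k)). pose proof (ch_len_pos E Hlf (w k) Hleaf).
        destruct (ch E Hlf (w k)) as [|a [|b l]]; simpl in *; try lia; auto.
        inversion H0 as [|a0 l0 Hna Hnd]; subst. exfalso. apply Hna. left. rewrite (H a), (H b); auto. }
      rewrite Hch. rewrite Hdep, Hw. simpl INR. rewrite sqrt_1. unfold cw.
      rewrite !Cmul_RtoC. apply pair_eq; simpl; rewrite Hsum; field.
Qed.

Lemma l2_exists {X} (f : X -> C) : in_l2 f -> exists s, l2_sqnorm f s.
Proof.
  intros [M HM]. destruct (completeness (fun x => exists l : list X, NoDup l /\ x = sqsum f l)) as [s Hs].
  - exists M. intros x [l [Hl E]]. subst. auto.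
  - exists 0. exists nil. split. constructor. reflexivity.
  - exists s. exact Hs.
Qed.

Lemma l2_unique {X} (f : X -> C) s s' : l2_sqnorm f s -> l2_sqnorm f s' -> s = s'.
Proof. intros [H1 H2] [H3 H4]. apply Rle_antisym; auto. Qed.

Lemma l2_in {X} (f : X -> C) s : l2_sqnorm f s -> in_l2 f.
Proof. intros [H _]. exists s. intros l Hl. apply H. exists l; auto. Qed.

Lemma l2_ub {X} (f : X -> C) s l : l2_sqnorm f s -> NoDup l -> sqsum f l <= s.
Proof. intros [H _] Hl. apply H. exists l; auto. Qed.

Definition upd {X} (h : X -> C) (p : X) (c : C) : X -> C :=
  fun y => if dec (y = p) then c else h y.

Lemma sqsum_upd_in {X} (h : X -> C) p c l : NoDup l -> In p l ->
  sqsum (upd h p c) l = sqsum h l - Cnorm2 (h p) + Cnorm2 c.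
Proof.
  intros Hn Hp. rewrite !sqsum_rsum. rewrite (rsum_rem _ p l Hp), (rsum_rem (fun x => Cnorm2 (h x)) p l Hp).
  unfold upd at 1. destruct (dec (p = p)); [|congruence].
  rewrite (rsum_ext_in (fun x => Cnorm2 (upd h p c x)) (fun x => Cnorm2 (h x))). lra.
  intros x Hx. unfold upd. destruct (dec (x = p)); auto. subst.
  exfalso. clear -Hn Hx. induction l; simpl in *; auto. inversion Hn; subst.
  destruct (dec (p = a)); subst; auto. destruct Hx; subst; auto.
Qed.

Lemma sqsum_upd_out {X} (h : X -> C) p c l : ~ In p l -> sqsum (upd h p c) l = sqsum h l.
Proof.
  intros Hp. rewrite !sqsum_rsum. apply rsum_ext_in. intros x Hx. unfold upd.
  destruct (dec (x = p)); subst; tauto.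
Qed.

Lemma l2_upd {X} (h : X -> C) p c s : l2_sqnorm h s ->
  l2_sqnorm (upd h p c) (s - Cnorm2 (h p) + Cnorm2 c).
Proof.
  intros Hs. pose proof (Cnorm2_nonneg c). split.
  - intros x [l [Hl E]]. subst. destruct (in_dec (fun a b => dec (a = b)) p l) as [Hp|Hp].
    + rewrite sqsum_upd_in; auto. pose proof (l2_ub h s l Hs Hl). lra.
    + rewrite sqsum_upd_out; auto. assert (NoDup (p :: l)) by (constructor; auto).
      pose proof (l2_ub h s (p :: l) Hs H0).
      change (sqsum h (p :: l)) with (Cnorm2 (h p) + sqsum h l) in H1. lra.
  - intros b Hb. assert (s <= b + Cnorm2 (h p) - Cnorm2 c); [|lra].
    destruct Hs as [_ Hs]. apply Hs. intros x [l [Hl E]]. subst.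
    destruct (in_dec (fun a b => dec (a = b)) p l) as [Hp|Hp].
    + assert (sqsum (upd h p c) l <= b) by (apply Hb; exists l; auto).
      rewrite sqsum_upd_in in H0; auto. lra.
    + assert (NoDup (p :: l)) by (constructor; auto).
      assert (sqsum (upd h p c) (p :: l) <= b) by (apply Hb; exists (p :: l); auto).
      rewrite sqsum_upd_in in H1; [|exact H0|left; reflexivity].
      change (sqsum h (p :: l)) with (Cnorm2 (h p) + sqsum h l) in H1. pose proof (Cnorm2_nonneg (h p)). lra.
Qed.

Lemma l2_zero {X} : l2_sqnorm (fun _ : X => C0) 0.
Proof.
  split.
  - intros x [l [_ E]]. subst. rewrite sqsum_rsum. rewrite rsum_zero. lra. intros; unfold Cnorm2, C0; simpl; ring.
  - intros b Hb. apply Hb. exists nil. split. constructor. reflexivity.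
Qed.

Definition pt {X} (p : X) (c : C) : X -> C := upd (fun _ => C0) p c.

Lemma l2_pt {X} (p : X) c : l2_sqnorm (pt p c) (Cnorm2 c).
Proof.
  unfold pt. replace (Cnorm2 c) with (0 - Cnorm2 C0 + Cnorm2 c). apply l2_upd. apply l2_zero.
  unfold Cnorm2, C0; simpl; ring.
Qed.

Lemma defect {Z} (h : Z -> C) (w : Z -> R) (c s : R) (z0 : Z) :
  l2_sqnorm h s -> 0 <= c -> (forall z, 0 <= w z) ->
  (forall z, w z * Cnorm2 (h z) <= c * Cnorm2 (h z)) ->
  forall l, NoDup l -> rsum (fun z => w z * Cnorm2 (h z)) l <= c * s - (c - w z0) * Cnorm2 (h z0).
Proof.
  intros Hs Hc Hw Hwc l Hl.
  set (l' := if in_dec (fun a b => dec (a = b)) z0 l then l else z0 :: l).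
  assert (Hl' : NoDup l' /\ In z0 l' /\ incl l l').
  { unfold l'. destruct (in_dec _ z0 l). split; auto. split; auto. intros x; auto.
    split. constructor; auto. split. left; auto. intros x Hx; right; auto. }
  destruct Hl' as [Hn [Hi Hinc]].
  assert (rsum (fun z => w z * Cnorm2 (h z)) l <= rsum (fun z => w z * Cnorm2 (h z)) l').
  { apply rsum_incl_le; auto. intros z. pose proof (Hw z); pose proof (Cnorm2_nonneg (h z)); nra. }
  assert (sqsum h l' <= s) by (apply (l2_ub h s); auto).
  rewrite sqsum_rsum in H0.
  rewrite (rsum_rem _ z0 l' Hi) in H. rewrite (rsum_rem _ z0 l' Hi) in H0.
  assert (0 <= c * rsum (fun z => Cnorm2 (h z)) (rem z0 l') - rsum (fun z => w z * Cnorm2 (h z)) (rem z0 l')).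
  { rewrite <- rsum_scal_l, <- rsum_minus. apply rsum_nonneg. intros z _. specialize (Hwc z). lra. }
  nra.
Qed.

Lemma shift_bound {Z} lz (LZ : nat -> list Z) (g : Z -> C) (W : Z -> R) :
  is_levels lz LZ -> sqsum g (LZ O) = 0 -> (forall t, sqsum g (LZ (S t)) = rsum W (LZ t)) ->
  forall l, NoDup l -> exists T, sqsum g l <= rsum W (pref LZ T).
Proof.
  intros HL H0 HS l Hl. destruct (sqsum_le_pref lz LZ g l HL Hl) as [T HT].
  exists T. eapply Rle_trans. apply HT.
  assert (sqsum g (pref LZ T) <= sqsum g (pref LZ (S T))) by (apply (sqsum_pref_mono lz); auto).
  eapply Rle_trans. apply H. apply Req_le.
  rewrite sqsum_rsum, !rsum_pref. simpl seq. rewrite rsum_cons. rewrite <- sqsum_rsum, H0.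
  rewrite <- seq_shift. rewrite rsum_map. rewrite Rplus_0_l. apply rsum_ext. intros t.
  rewrite <- sqsum_rsum. apply HS.
Qed.

Definition Cconj (a : C) : C := (fst a, - snd a).
Definition C1 : C := (1, 0).

Lemma Cnorm2_mul a b : Cnorm2 (Cmul a b) = Cnorm2 a * Cnorm2 b.
Proof. destruct a, b; unfold Cnorm2, Cmul; simpl; ring. Qed.
Lemma Cnorm2_conj a : Cnorm2 (Cconj a) = Cnorm2 a.
Proof. destruct a; unfold Cnorm2, Cconj; simpl; ring. Qed.
Lemma Cmul_conj_l a g : Cmul (Cmul (Cconj a) g) a = Cmul (RtoC (Cnorm2 a)) g.
Proof. destruct a, g; unfold Cnorm2, Cconj, Cmul, RtoC; simpl; apply pair_eq; simpl; ring. Qed.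
Lemma Cmul_1 g : Cmul (RtoC 1) g = g.
Proof. destruct g; unfold Cmul, RtoC; simpl; apply pair_eq; simpl; ring. Qed.
Lemma Cadd_0 g : Cadd g C0 = g.
Proof. destruct g; unfold Cadd, C0; simpl; apply pair_eq; simpl; ring. Qed.
Lemma Cadd_0l g : Cadd C0 g = g.
Proof. destruct g; unfold Cadd, C0; simpl; apply pair_eq; simpl; ring. Qed.
Lemma Cmul_0 g : Cmul g C0 = C0.
Proof. destruct g; unfold Cmul, C0; simpl; apply pair_eq; simpl; ring. Qed.
Lemma Cnorm2_double g : Cnorm2 (Cadd g g) = 4 * Cnorm2 g.
Proof. destruct g; unfold Cnorm2, Cadd; simpl; ring. Qed.
Lemma Cnorm2_C1 : Cnorm2 C1 = 1.
Proof. unfold Cnorm2, C1; simpl; ring. Qed.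
Lemma Cnorm2_C0 : Cnorm2 C0 = 0.
Proof. unfold Cnorm2, C0; simpl; ring. Qed.

Lemma U_norm {X Y} (U : (X -> C) -> (Y -> C)) f s :
  is_unitary U -> l2_sqnorm f s -> l2_sqnorm (U f) s.
Proof. intros (_ & _ & H & _) Hs. apply H; auto. eapply l2_in; eauto. Qed.

Lemma U_l2u {X Y} (U : (X -> C) -> (Y -> C)) f :
  is_unitary U -> in_l2 f -> in_l2 (U f).
Proof. intros (H & _) Hs. apply H; auto. Qed.

Lemma U_zero {X Y} (U : (X -> C) -> (Y -> C)) y :
  is_unitary U -> U (fun _ => C0) y = C0.
Proof.
  intros (_ & Hl & _). assert (Hz : in_l2 (fun _ : X => C0)) by (eapply l2_in; apply l2_zero).
  pose proof (Hl C1 _ _ Hz Hz y) as H.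
  assert (E : (fun x : X => Cadd (Cmul C1 C0) C0) = (fun _ : X => C0)).
  { apply functional_extensionality; intros; unfold Cadd, Cmul, C1, C0; simpl; apply pair_eq; simpl; ring. }
  cbv beta in H. rewrite E in H.
  revert H. generalize (U (fun _ => C0) y). intros [a b] H. unfold Cadd, Cmul, C1 in H. simpl in H.
  inversion H. unfold C0. f_equal; lra.
Qed.

Lemma U_scal {X Y} (U : (X -> C) -> (Y -> C)) a f y :
  is_unitary U -> in_l2 f -> U (fun x => Cmul a (f x)) y = Cmul a (U f y).
Proof.
  intros HU Hf. pose proof HU as (_ & Hl & _). assert (Hz : in_l2 (fun _ : X => C0)) by (eapply l2_in; apply l2_zero).
  pose proof (Hl a _ _ Hf Hz y) as H.
  assert (E : (fun x : X => Cadd (Cmul a (f x)) C0) = (fun x : X => Cmul a (f x))).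
  { apply functional_extensionality; intros; rewrite Cadd_0; auto. }
  cbv beta in H. rewrite E in H.
  rewrite H, U_zero, Cadd_0; auto.
Qed.

Lemma ortho {X Y} (U : (X -> C) -> (Y -> C)) x x' p a :
  is_unitary U -> x <> x' -> (forall y, U (pt x' C1) y = pt p a y) -> Cnorm2 a = 1 ->
  U (pt x C1) p = C0.
Proof.
  intros HU Hne Hx' Ha.
  set (g := U (pt x C1)). set (gm := g p).
  assert (Hg : l2_sqnorm g 1). { rewrite <- Cnorm2_C1. apply U_norm; auto. apply l2_pt. }
  assert (Hh0 : forall zz, (fun u => Cadd (Cmul zz (pt x' C1 u)) (pt x C1 u)) = upd (pt x C1) x' zz).
  { intros [z1 z2]. apply functional_extensionality; intros u. unfold upd, pt, upd.
    destruct (dec (u = x')), (dec (u = x)); subst; try congruence;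
    unfold Cadd, Cmul, C1, C0; simpl; apply pair_eq; simpl; ring. }
  set (z := Cmul (Cconj a) gm).
  set (h := fun u => Cadd (Cmul z (pt x' C1 u)) (pt x C1 u)).
  assert (Hh : h = upd (pt x C1) x' z) by apply Hh0.
  assert (Hhn : l2_sqnorm h (1 + Cnorm2 z)).
  { rewrite Hh. replace (1 + Cnorm2 z) with (Cnorm2 C1 - Cnorm2 (pt x C1 x') + Cnorm2 z).
    apply l2_upd. apply l2_pt. unfold pt, upd. destruct (dec (x' = x)). congruence. rewrite Cnorm2_C1, Cnorm2_C0. ring. }
  assert (HUh : U h = upd g p (Cadd (Cmul z a) gm)).
  { apply functional_extensionality; intros y. pose proof HU as (_ & Hl & _).
    unfold h. rewrite Hl. 2,3: eapply l2_in; apply l2_pt.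
    rewrite Hx'. unfold upd, pt, upd. fold g. destruct (dec (y = p)); subst; auto.
    rewrite Cmul_0. apply Cadd_0l. }
  assert (H1 : l2_sqnorm (U h) (1 + Cnorm2 z)) by (apply U_norm; auto).
  assert (H2 : l2_sqnorm (U h) (1 - Cnorm2 gm + Cnorm2 (Cadd (Cmul z a) gm))).
  { rewrite HUh. apply l2_upd; auto. }
  pose proof (l2_unique _ _ _ H1 H2) as Heq.
  unfold z in Heq. rewrite Cmul_conj_l, Ha, Cmul_1, Cnorm2_double, Cnorm2_mul, Cnorm2_conj, Ha in Heq.
  apply Cnorm2_zero. lra.
Qed.

Definition Yt (m : nat) := ({i : nat | (i < m)%nat} * nat)%type.

Definition sigl (m : nat) : list {i : nat | (i < m)%nat} :=
  concat (map (fun i => match lt_dec i m with left H => exist _ i H :: nil | right _ => nil end) (seq 0 m)).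

Lemma sigl_in m (i : {i : nat | (i < m)%nat}) : In i (sigl m).
Proof.
  destruct i as [i Hi]. unfold sigl. apply in_concat_map. exists i. split. apply in_seq; lia.
  destruct (lt_dec i m). left. f_equal. apply proof_irrelevance. contradiction.
Qed.

Lemma sigl_nodup m : NoDup (sigl m).
Proof.
  unfold sigl. apply NoDup_concat_map. apply seq_NoDup.
  intros a _. destruct (lt_dec a m); repeat constructor; auto.
  intros a a' b _ _ Ha Ha'. destruct (lt_dec a m), (lt_dec a' m); simpl in *; try tauto.
  destruct Ha as [Ha|[]], Ha' as [Ha'|[]]. subst. inversion Ha'. auto.
Qed.

Definition LYm (m : nat) (t : nat) : list (Yt m) := map (fun i => (i, t)) (sigl m).

Lemma LYm_levels m : is_levels (fun y : Yt m => snd y) (LYm m).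
Proof.
  split.
  - intros t. unfold LYm. apply Injective_map_NoDup. intros a b E; inversion E; auto. apply sigl_nodup.
  - intros t [i n]. unfold LYm. rewrite in_map_iff. simpl. split.
    + intros [j [E _]]. inversion E; auto.
    + intros; subst. exists i. split; auto. apply sigl_in.
Qed.

Lemma cw_0 q : cw q 0 = q.
Proof. unfold cw. simpl. field. Qed.

Lemma cw_le_q q n : 1 <= q -> cw q n <= q.
Proof.
  intros Hq. pose proof (pos_INR n).
  assert (q - cw q n = (q - 1) * INR n * / (INR n + 1)) by (unfold cw; field; lra).
  assert (0 <= (q - 1) * INR n * / (INR n + 1)).
  { apply Rmult_le_pos. apply Rmult_le_pos; lra. left; apply Rinv_0_lt_compat; lra. }
  lra.
Qed.

Lemma cw_diff q n n' : cw q n - cw q n' = (q - 1) * (INR n' - INR n) * / ((INR n + 1) * (INR n' + 1)).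
Proof. pose proof (pos_INR n). pose proof (pos_INR n'). unfold cw; field; lra. Qed.

Lemma cw_anti q n n' : 1 <= q -> (n <= n')%nat -> cw q n' <= cw q n.
Proof.
  intros Hq Hn. apply le_INR in Hn. pose proof (pos_INR n). pose proof (cw_diff q n n').
  assert (0 <= (q - 1) * (INR n' - INR n) * / ((INR n + 1) * (INR n' + 1))).
  { apply Rmult_le_pos. apply Rmult_le_pos; lra. left; apply Rinv_0_lt_compat. nra. }
  lra.
Qed.

Lemma cw_strict q n n' : 1 < q -> (n < n')%nat -> cw q n' < cw q n.
Proof.
  intros Hq Hn. apply lt_INR in Hn. pose proof (pos_INR n). pose proof (cw_diff q n n').
  assert (0 < (q - 1) * (INR n' - INR n) * / ((INR n + 1) * (INR n' + 1))).
  { apply Rmult_lt_0_compat. apply Rmult_lt_0_compat; lra. apply Rinv_0_lt_compat. nra. }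
  lra.
Qed.

Lemma tree_L0 {V} (E : V -> V -> Prop) root (Hlf : locally_finite E) lam f :
  rooted_directed_tree E root -> sqsum (weighted_shift E lam f) (Ld E Hlf root O) = 0.
Proof.
  intros HT. simpl. rewrite ws_root; auto. unfold sqsum; simpl. rewrite Cnorm2_C0. ring.
Qed.

Lemma tree_LS {V} (E : V -> V -> Prop) root HT (Hlf : locally_finite E) q lam f t :
  1 <= q -> leafless E -> dirichlet_weights E root q lam ->
  sqsum (weighted_shift E lam f) (Ld E Hlf root (S t)) =
  rsum (fun v => cw q (dep E root HT v) * Cnorm2 (f v)) (Ld E Hlf root t).
Proof.
  intros Hq Hl Hw. simpl. rewrite sqsum_rsum, rsum_concat_map. apply rsum_ext. intros v.
  rewrite (rsum_ext_in _ (fun u => lam u * lam u * Cnorm2 (f v))).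
  rewrite rsum_scal_r. rewrite (lam_sq_sum E root HT Hlf q lam v); auto.
  intros u Hu. apply ch_spec in Hu. rewrite (ws_child E root lam f v u); auto. apply Cnorm2_scal.
Qed.

Lemma tree_defect {V} (E : V -> V -> Prop) root HT (Hlf : locally_finite E) q lam f s s' x :
  1 <= q -> leafless E -> dirichlet_weights E root q lam ->
  l2_sqnorm f s -> l2_sqnorm (weighted_shift E lam f) s' ->
  s' <= q * s - (q - cw q (dep E root HT x)) * Cnorm2 (f x).
Proof.
  intros Hq Hl Hw Hs [_ Hs']. apply Hs'. intros z [l [Hn E1]]. subst.
  destruct (shift_bound (dep E root HT) (Ld E Hlf root) (weighted_shift E lam f)
     (fun v => cw q (dep E root HT v) * Cnorm2 (f v)) (Ld_levels E root HT Hlf)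
     (tree_L0 E root Hlf lam f HT) (fun t => tree_LS E root HT Hlf q lam f t Hq Hl Hw) l Hn) as [T HT'].
  eapply Rle_trans. apply HT'.
  apply (defect f (fun v => cw q (dep E root HT v)) q s x); auto. lra.
  intros; left; apply cw_pos; auto.
  intros z. apply Rmult_le_compat_r. apply Cnorm2_nonneg. apply cw_le_q; auto.
  apply (pref_nodup (dep E root HT)). apply Ld_levels.
Qed.

Lemma S_in_l2 {V} (E : V -> V -> Prop) root (HT : rooted_directed_tree E root) (Hlf : locally_finite E) q lam f :
  1 <= q -> leafless E -> dirichlet_weights E root q lam ->
  in_l2 f -> in_l2 (weighted_shift E lam f).
Proof.
  intros Hq Hl Hw Hf. destruct (l2_exists f Hf) as [s Hs].
  exists (q * s - (q - cw q (dep E root HT root)) * Cnorm2 (f root)). intros l Hn.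
  destruct (shift_bound (dep E root HT) (Ld E Hlf root) (weighted_shift E lam f)
     (fun v => cw q (dep E root HT v) * Cnorm2 (f v)) (Ld_levels E root HT Hlf)
     (tree_L0 E root Hlf lam f HT) (fun t => tree_LS E root HT Hlf q lam f t Hq Hl Hw) l Hn) as [T HT'].
  eapply Rle_trans. apply HT'.
  apply (defect f (fun v => cw q (dep E root HT v)) q s root); auto. lra.
  intros; left; apply cw_pos; auto.
  intros z. apply Rmult_le_compat_r. apply Cnorm2_nonneg. apply cw_le_q; auto.
  apply (pref_nodup (dep E root HT)). apply Ld_levels.
Qed.

Lemma B_L0 m q g : sqsum (direct_sum m (classical_dirichlet q) g) (LYm m O) = 0.
Proof.
  rewrite sqsum_rsum. apply rsum_zero. intros y Hy. unfold LYm in Hy. apply in_map_iff in Hy.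
  destruct Hy as [i [E1 _]]. subst. unfold direct_sum. simpl. apply Cnorm2_C0.
Qed.

Lemma B_LS m q g t : 1 <= q ->
  sqsum (direct_sum m (classical_dirichlet q) g) (LYm m (S t)) =
  rsum (fun y : Yt m => cw q (snd y) * Cnorm2 (g y)) (LYm m t).
Proof.
  intros Hq. rewrite sqsum_rsum. unfold LYm. rewrite !rsum_map. apply rsum_ext. intros i.
  unfold direct_sum. simpl. rewrite Cnorm2_scal. f_equal. apply sqrt_sqrt.
  left. apply (cw_pos q t Hq).
Qed.

Lemma B_defect m q g s s' t y :
  1 <= q -> l2_sqnorm g s -> l2_sqnorm (direct_sum m (classical_dirichlet q) g) s' ->
  (forall y : Yt m, (snd y < t)%nat -> g y = C0) ->
  s' <= cw q t * s - (cw q t - cw q (snd y)) * Cnorm2 (g y).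
Proof.
  intros Hq Hs [_ Hs'] Hlow. apply Hs'. intros z [l [Hn E1]]. subst.
  destruct (shift_bound (fun y : Yt m => snd y) (LYm m) (direct_sum m (classical_dirichlet q) g)
     (fun y => cw q (snd y) * Cnorm2 (g y)) (LYm_levels m) (B_L0 m q g) (fun t => B_LS m q g t Hq) l Hn) as [T HT'].
  eapply Rle_trans. apply HT'.
  apply (defect g (fun y => cw q (snd y)) (cw q t) s y); auto.
  4: apply (pref_nodup (fun y : Yt m => snd y)); apply LYm_levels.
  left; apply cw_pos; auto. intros; left; apply cw_pos; auto.
  intros z. destruct (lt_dec (snd z) t).
  - rewrite Hlow; auto. rewrite Cnorm2_C0. lra.
  - apply Rmult_le_compat_r. apply Cnorm2_nonneg. apply cw_anti; auto. lia.
Qed.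

Lemma S_pt_lower {V} (E : V -> V -> Prop) root HT (Hlf : locally_finite E) q lam v s' :
  1 <= q -> leafless E -> dirichlet_weights E root q lam ->
  l2_sqnorm (weighted_shift E lam (pt v C1)) s' -> cw q (dep E root HT v) <= s'.
Proof.
  intros Hq Hl Hw Hs. rewrite <- (lam_sq_sum E root HT Hlf q lam v); auto.
  eapply Rle_trans. 2: apply (l2_ub _ _ (ch E Hlf v) Hs (ch_nodup E Hlf v)).
  rewrite sqsum_rsum. apply Req_le. apply rsum_ext_in. intros u Hu. apply ch_spec in Hu.
  rewrite (ws_child E root lam _ v u); auto. rewrite Cnorm2_scal. unfold pt, upd.
  destruct (dec (v = v)); [|congruence]. rewrite Cnorm2_C1. ring.
Qed.

Lemma depth_vertex {V} (E : V -> V -> Prop) root (HT : rooted_directed_tree E root) (Hl : leafless E) t : exists v, dep E root HT v = t.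
Proof.
  induction t. exists root; apply dep_root. destruct IHt as [v Hv]. destruct (Hl v) as [u Hu].
  exists u. rewrite (dep_edge E root HT v u Hu), Hv. auto.
Qed.

Lemma Cnorm2_RtoC r : Cnorm2 (RtoC r) = r * r.
Proof. unfold Cnorm2, RtoC; simpl; ring. Qed.

Lemma B_pt0 m q (i : {i : nat | (i < m)%nat}) :
  direct_sum m (classical_dirichlet q) (pt (i, 0%nat) C1) = pt (i, 1%nat) (RtoC (sqrt (cw q 0))).
Proof.
  apply functional_extensionality. intros [j n]. unfold direct_sum. destruct n; simpl.
  - unfold pt, upd. destruct (dec ((j, 0%nat) = (i, 1%nat))). inversion e. reflexivity.
  - unfold pt, upd. destruct (dec ((j, n) = (i, 0%nat))), (dec ((j, S n) = (i, 1%nat))).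
    + inversion e; subst. unfold Cmul, RtoC, C1, cw; simpl. apply pair_eq; simpl; ring.
    + exfalso. inversion e; subst. apply n0; auto.
    + exfalso. inversion e; subst. apply n0; auto.
    + apply Cmul_0.
Qed.

Lemma pre_root {V} (E : V -> V -> Prop) root (HT : rooted_directed_tree E root) (Hlf : locally_finite E) q lam m
  (U : (V -> C) -> (Yt m -> C)) i f x :
  1 < q -> leafless E -> dirichlet_weights E root q lam -> is_unitary U ->
  (forall f, in_l2 f -> forall y, U (weighted_shift E lam f) y = direct_sum m (classical_dirichlet q) (U f) y) ->
  in_l2 f -> (forall y, U f y = pt (i, 0%nat) C1 y) -> x <> root -> f x = C0.
Proof.
  intros Hq Hl Hw HU Hint Hf HUf Hx.
  destruct (l2_exists f Hf) as [s Hs].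
  assert (EUf : U f = pt (i, 0%nat) C1) by (apply functional_extensionality; auto).
  assert (Hs1 : s = 1).
  { pose proof (U_norm U f s HU Hs) as H. rewrite EUf in H. rewrite <- Cnorm2_C1. eapply l2_unique; eauto. apply l2_pt. }
  assert (HSf : in_l2 (weighted_shift E lam f)) by (eapply S_in_l2; eauto; lra).
  destruct (l2_exists _ HSf) as [s' Hs'].
  assert (Hs'q : s' = q).
  { pose proof (U_norm U _ s' HU Hs') as H.
    replace (U (weighted_shift E lam f)) with (pt (i, 1%nat) (RtoC (sqrt (cw q 0)))) in H.
    pose proof (l2_pt (i, 1%nat) (RtoC (sqrt (cw q 0)))). rewrite (l2_unique _ _ _ H H0).
    rewrite Cnorm2_RtoC, sqrt_sqrt, cw_0; auto. rewrite cw_0; lra.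
    apply functional_extensionality. intros y. rewrite Hint; auto. rewrite EUf, B_pt0. auto. }
  pose proof (tree_defect E root HT Hlf q lam f s s' x (Rlt_le _ _ Hq) Hl Hw Hs Hs') as Hd.
  assert (Hdx : (0 < dep E root HT x)%nat).
  { destruct (dep E root HT x) eqn:Ed. exfalso. apply Hx. eapply dep_0; eauto. lia. }
  pose proof (cw_strict q 0 (dep E root HT x) Hq Hdx). rewrite cw_0 in H.
  apply Cnorm2_le0. subst. nra.
Qed.

Theorem forward {V} (E : V -> V -> Prop) root q lam
  (HT : rooted_directed_tree E root) (Hlf : locally_finite E) (Hleaf : leafless E)
  (Hq : 1 < q) (Hlam : dirichlet_weights E root q lam) :
  (exists m : nat, (1 <= m)%nat /\
     unitarily_equivalent (weighted_shift E lam) (direct_sum m (classical_dirichlet q))) ->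
  iso_to_nat E.
Proof.
  intros [m [Hm [U [HU Hint]]]].
  assert (Hm1 : m = 1%nat).
  { destruct (Nat.eq_dec m 1) as [|Hne]; auto. exfalso.
    assert (H0 : (0 < m)%nat) by lia. assert (H1 : (1 < m)%nat) by lia.
    set (ia := exist (fun i => (i < m)%nat) 0%nat H0). set (ib := exist (fun i => (i < m)%nat) 1%nat H1).
    pose proof HU as (_ & _ & _ & Hsurj).
    destruct (Hsurj (pt (ia, 0%nat) C1)) as [f0 [Hf0 HUf0]]. eapply l2_in; apply l2_pt.
    destruct (Hsurj (pt (ib, 0%nat) C1)) as [f1 [Hf1 HUf1]]. eapply l2_in; apply l2_pt.
    assert (Hr0 : forall x, x <> root -> f0 x = C0) by (intros; eapply (pre_root E root HT Hlf q lam m U); eauto).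
    assert (Hr1 : forall x, x <> root -> f1 x = C0) by (intros; eapply (pre_root E root HT Hlf q lam m U); eauto).
    set (a := f0 root). set (b := f1 root).
    assert (Hfun : (fun x => Cmul a (f1 x)) = (fun x => Cmul b (f0 x))).
    { apply functional_extensionality. intros x. destruct (dec (x = root)).
      - subst. unfold a, b. destruct (f0 root), (f1 root). unfold Cmul; simpl; apply pair_eq; simpl; ring.
      - rewrite Hr0, Hr1, !Cmul_0; auto. }
    assert (HH := U_scal U a f1 (ib, 0%nat) HU Hf1). rewrite Hfun, U_scal, HUf0, HUf1 in HH; auto.
    assert (Hab : ia <> ib) by (intro E1; inversion E1).
    unfold pt, upd in HH. destruct (dec ((ib, 0%nat) = (ia, 0%nat))). exfalso; apply Hab; inversion e; auto.
    destruct (dec ((ib, 0%nat) = (ib, 0%nat))); [|congruence].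
    rewrite Cmul_0 in HH. assert (Ha : a = C0).
    { revert HH. destruct a. unfold Cmul, C1, C0; simpl. intros HH. inversion HH. f_equal; lra. }
    assert (Hz : f0 = fun _ => C0).
    { apply functional_extensionality. intros x. destruct (dec (x = root)). subst; auto. auto. }
    pose proof (HUf0 (ia, 0%nat)) as HH'. rewrite Hz, U_zero in HH'; auto.
    unfold pt, upd in HH'. destruct (dec ((ia, 0%nat) = (ia, 0%nat))); [|congruence].
    unfold C0, C1 in HH'. inversion HH'. lra. }
  subst m.
  assert (Hcl : forall t v, dep E root HT v = t ->
             exists a, Cnorm2 a = 1 /\ forall y, U (pt v C1) y = pt (i0, t) a y).
  { intros t. induction t as [t IH] using lt_wf_ind. intros v Hv.
    set (g := U (pt v C1)).
    assert (Hg : l2_sqnorm g 1) by (rewrite <- Cnorm2_C1; apply U_norm; auto; apply l2_pt).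
    assert (Hlow : forall y : Yt 1, (snd y < t)%nat -> g y = C0).
    { intros [i s] Hs. simpl in Hs. rewrite (sig1_eq i). destruct (depth_vertex E root HT Hleaf s) as [w Hw].
      destruct (IH s Hs w Hw) as [a [Ha Hwa]]. apply (ortho U v w (i0, s) a); auto. intro; subst; lia. }
    assert (HSe : in_l2 (weighted_shift E lam (pt v C1))).
    { eapply S_in_l2; eauto. lra. eapply l2_in; apply l2_pt. }
    destruct (l2_exists _ HSe) as [s' Hs'].
    assert (HBg : l2_sqnorm (direct_sum 1 (classical_dirichlet q) g) s').
    { replace (direct_sum 1 (classical_dirichlet q) g) with (U (weighted_shift E lam (pt v C1))).
      apply U_norm; auto. apply functional_extensionality; intros y; apply Hint. eapply l2_in; apply l2_pt. }
    assert (Hlo : cw q t <= s') by (rewrite <- Hv; eapply (S_pt_lower E root HT Hlf q lam); eauto; lra).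
    assert (Hhigh : forall y : Yt 1, (t < snd y)%nat -> g y = C0).
    { intros y Hy. pose proof (B_defect 1 q g 1 s' t y (Rlt_le _ _ Hq) Hg HBg Hlow).
      pose proof (cw_strict q t (snd y) Hq Hy). apply Cnorm2_le0. nra. }
    assert (Hge : g = pt (i0, t) (g (i0, t))).
    { apply functional_extensionality. intros [i n]. rewrite (sig1_eq i). unfold pt, upd.
      destruct (dec ((i0, n) = (i0, t))). inversion e; subst; auto.
      destruct (lt_eq_lt_dec n t) as [[Hlt|Heq]|Hgt]. apply Hlow; auto. subst; congruence. apply Hhigh; auto. }
    exists (g (i0, t)). split.
    - rewrite Hge in Hg. symmetry. eapply l2_unique. apply Hg. apply l2_pt.
    - intros y. exact (f_equal (fun h => h y) Hge). }
  assert (Huniq : forall v v', dep E root HT v = dep E root HT v' -> v = v').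
  { intros v v' Hd. destruct (dec (v = v')) as [|Hn]; auto. exfalso.
    destruct (Hcl (dep E root HT v) v eq_refl) as [a [Ha Hva]].
    destruct (Hcl (dep E root HT v) v' (eq_sym Hd)) as [a' [Ha' Hva']].
    pose proof (ortho U v v' (i0, dep E root HT v) a' HU Hn Hva' Ha') as H.
    rewrite Hva in H. unfold pt, upd in H. destruct (dec _) as [_|Hc]; [|congruence].
    subst a. rewrite Cnorm2_C0 in Ha. lra. }
  exists (dep E root HT). split; [|split].
  - intros u v H; apply Huniq; auto.
  - intros n; apply depth_vertex; auto.
  - intros u v. split. intros H. apply dep_edge; auto.
    intros H. destruct (dep_S E root HT v _ H) as [w [Ew Hw]]. rewrite (Huniq w u Hw) in Ew. auto.
Qed.

Definition hc (j : nat) : R := / sqrt (INR j * (INR j + 1)).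
Definition Hm (j a : nat) : R :=
  if lt_dec a j then hc j else if Nat.eq_dec a j then - INR j * hc j else 0.

Lemma hc_sq j : (1 <= j)%nat -> hc j * hc j = / (INR j * (INR j + 1)).
Proof.
  intros Hj. unfold hc. assert (0 < INR j) by (apply lt_0_INR; lia).
  assert (0 < INR j * (INR j + 1)) by nra.
  rewrite <- Rinv_mult. rewrite sqrt_sqrt; lra.
Qed.

Lemma rsum_seq_S (F : nat -> R) s n : rsum F (seq s (S n)) = rsum F (seq s n) + F (s + n)%nat.
Proof. rewrite seq_S, rsum_app. unfold rsum at 2; simpl. lra. Qed.

Lemma rsum_seq_trunc (F : nat -> R) j k : (j < k)%nat -> (forall a, (j < a)%nat -> F a = 0) ->
  rsum F (seq 0 k) = rsum F (seq 0 (S j)).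
Proof.
  intros Hjk HF. replace k with (S j + (k - S j))%nat by lia. rewrite seq_app, rsum_app.
  rewrite (rsum_zero F (seq (0 + S j) _)). lra. intros a Ha. apply in_seq in Ha. apply HF. lia.
Qed.

Lemma rsum_Hm_lt j : rsum (Hm j) (seq 0 j) = INR j * hc j.
Proof.
  rewrite (rsum_ext_in _ (fun _ => hc j)). rewrite rsum_const, length_seq. auto.
  intros a Ha. apply in_seq in Ha. unfold Hm. destruct (lt_dec a j); auto. lia.
Qed.

Lemma Hm_sum j k : (1 <= j)%nat -> (j < k)%nat -> rsum (Hm j) (seq 0 k) = 0.
Proof.
  intros H1 H2. rewrite (rsum_seq_trunc _ j k); auto.
  rewrite rsum_seq_S, rsum_Hm_lt. simpl. unfold Hm. destruct (lt_dec j j). lia.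
  destruct (Nat.eq_dec j j). ring. lia.
  intros a Ha. unfold Hm. destruct (lt_dec a j). lia. destruct (Nat.eq_dec a j). lia. auto.
Qed.

Lemma Hm_ortho_lt j j' k : (1 <= j)%nat -> (j < j')%nat -> (j' < k)%nat ->
  rsum (fun a => Hm j a * Hm j' a) (seq 0 k) = 0.
Proof.
  intros H1 H2 H3. rewrite (rsum_ext _ (fun a => hc j' * Hm j a)).
  rewrite rsum_scal_l, Hm_sum; [ring|lia|lia].
  intros a. unfold Hm. destruct (lt_dec a j), (lt_dec a j'); try lia; try ring;
  destruct (Nat.eq_dec a j), (Nat.eq_dec a j'); try lia; ring.
Qed.

Lemma Hm_norm j k : (1 <= j)%nat -> (j < k)%nat -> rsum (fun a => Hm j a * Hm j a) (seq 0 k) = 1.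
Proof.
  intros H1 H2. rewrite (rsum_seq_trunc _ j k); auto.
  rewrite rsum_seq_S. rewrite (rsum_ext_in _ (fun _ => hc j * hc j)).
  rewrite rsum_const, length_seq. simpl. unfold Hm at 1 2. destruct (lt_dec j j). lia.
  destruct (Nat.eq_dec j j); [|lia].
  replace (INR j * (hc j * hc j) + - INR j * hc j * (- INR j * hc j)) with (INR j * (INR j + 1) * (hc j * hc j)) by ring.
  rewrite hc_sq; auto. assert (0 < INR j) by (apply lt_0_INR; lia). field. lra.
  intros a Ha. apply in_seq in Ha. unfold Hm. destruct (lt_dec a j); auto. lia.
  intros a Ha. unfold Hm. destruct (lt_dec a j). lia. destruct (Nat.eq_dec a j). lia. ring.
Qed.

Lemma Hm_ortho j j' k : (1 <= j)%nat -> (j < k)%nat -> (1 <= j')%nat -> (j' < k)%nat ->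
  rsum (fun a => Hm j a * Hm j' a) (seq 0 k) = delta j j'.
Proof.
  intros. destruct (Nat.eq_dec j j'). subst. rewrite delta_refl. apply Hm_norm; auto.
  rewrite delta_neq; auto. destruct (lt_dec j j'). apply Hm_ortho_lt; auto.
  rewrite (rsum_ext _ (fun a => Hm j' a * Hm j a)) by (intros; ring). apply Hm_ortho_lt; lia.
Qed.

Lemma Hm_zero_above j a : (j < a)%nat -> Hm j a = 0.
Proof. intros. unfold Hm. destruct (lt_dec a j). lia. destruct (Nat.eq_dec a j). lia. auto. Qed.

Lemma Hm_lt j a : (a < j)%nat -> Hm j a = hc j.
Proof. intros. unfold Hm. destruct (lt_dec a j); auto. lia. Qed.
Lemma Hm_eq j : Hm j j = - INR j * hc j.
Proof. unfold Hm. destruct (lt_dec j j). lia. destruct (Nat.eq_dec j j); auto. lia. Qed.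

Lemma Hm_complete k : forall a b, (a <= k)%nat -> (b <= k)%nat ->
  / INR (S k) + rsum (fun j => Hm j a * Hm j b) (seq 1 k) = delta a b.
Proof.
  induction k; intros a b Ha Hb.
  - assert (a = 0%nat) by lia. assert (b = 0%nat) by lia. subst. rewrite delta_refl. simpl. unfold rsum; simpl. field.
  - rewrite rsum_seq_S. replace (1 + k)%nat with (S k) by lia.
    assert (0 < INR (S k)) by (apply lt_0_INR; lia).
    assert (Hs : INR (S (S k)) = INR (S k) + 1) by (rewrite S_INR; auto).
    assert (Hh := hc_sq (S k) ltac:(lia)).
    set (c := hc (S k)) in *. set (K := INR (S k)) in *.
    destruct (Nat.eq_dec a (S k)), (Nat.eq_dec b (S k)); subst.
    + rewrite delta_refl. rewrite rsum_zero. rewrite Hm_eq. fold c K.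
      replace (- K * c * (- K * c)) with (K * K * (c * c)) by ring.
      rewrite Hh, Hs. field. lra.
      intros j Hj. apply in_seq in Hj. rewrite (Hm_zero_above j (S k)); [ring|lia].
    + rewrite delta_neq by lia. rewrite rsum_zero. rewrite Hm_eq, Hm_lt by lia. fold c K.
      replace (- K * c * c) with (- K * (c * c)) by ring.
      rewrite Hh, Hs. field. lra.
      intros j Hj. apply in_seq in Hj. rewrite (Hm_zero_above j (S k)); [ring|lia].
    + rewrite delta_neq by lia. rewrite rsum_zero. rewrite Hm_eq, Hm_lt by lia. fold c K.
      replace (c * (- K * c)) with (- K * (c * c)) by ring.
      rewrite Hh, Hs. field. lra.
      intros j Hj. apply in_seq in Hj. rewrite (Hm_zero_above j (S k)); [ring|lia].
    + assert (IH := IHk a b ltac:(lia) ltac:(lia)).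
      rewrite (Hm_lt (S k) a), (Hm_lt (S k) b) by lia. fold c.
      rewrite Hh, Hs. fold K.
      assert (rsum (fun j => Hm j a * Hm j b) (seq 1 k) = delta a b - / K).
      { unfold K in *. lra. }
      rewrite H0. field. lra.
Qed.

Fixpoint idx {V : Type} (x : V) (l : list V) : nat :=
  match l with nil => 0%nat | y :: r => if dec (x = y) then 0%nat else S (idx x r) end.

Lemma idx_lt {V} (x : V) l : In x l -> (idx x l < length l)%nat.
Proof.
  induction l; simpl; intros H. contradiction. destruct (dec (x = a)). lia.
  destruct H. congruence. specialize (IHl H). lia.
Qed.

Lemma idx_inj {V} (x x' : V) l : In x l -> In x' l -> idx x l = idx x' l -> x = x'.
Proof.
  induction l; simpl; intros H H' E. contradiction.
  destruct (dec (x = a)), (dec (x' = a)); subst; auto; try discriminate.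
  destruct H; [congruence|]. destruct H'; [congruence|]. inversion E. auto.
Qed.

Lemma rsum_idx {V} (F : nat -> R) (l : list V) : NoDup l ->
  rsum (fun x => F (idx x l)) l = rsum F (seq 0 (length l)).
Proof.
  revert F. induction l; intros F Hn. reflexivity. inversion Hn; subst.
  rewrite rsum_cons. change (length (a :: l)) with (S (length l)). change (seq 0 (S (length l))) with (0%nat :: seq 1 (length l)).
  rewrite rsum_cons. change (idx a (a :: l)) with (if dec (a = a) then 0%nat else S (idx a l)).
  destruct (dec (a = a)); [|congruence]. f_equal. rewrite <- seq_shift, rsum_map.
  rewrite <- (IHl (fun a => F (S a)) H2). apply rsum_ext_in. intros x Hx. simpl. destruct (dec (x = a)); subst; tauto.
Qed.

Lemma rsum_same {X} (F : X -> R) l1 l2 : NoDup l1 -> NoDup l2 -> (forall x, In x l1 <-> In x l2) ->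
  rsum F l1 = rsum F l2.
Proof.
  intros H1 H2 H. symmetry. apply rsum_incl_eq; auto. intros x Hx; apply H; auto.
  intros x Hx Hn. exfalso; apply Hn; apply H; auto.
Qed.

Lemma rsum_filter {X} (F : X -> R) (P : X -> bool) l :
  rsum F (filter P l) = rsum (fun x => if P x then F x else 0) l.
Proof.
  induction l. reflexivity. change (filter P (a :: l)) with (if P a then a :: filter P l else filter P l).
  rewrite (rsum_cons _ a l). cbv beta. destruct (P a); rewrite ?rsum_cons, IHl; ring.
Qed.

Definition Sr {V} (E : V -> V -> Prop) (lam : V -> R) (h : V -> R) (x : V) : R :=
  match parent E x with Some v => lam x * h v | None => 0 end.

Lemma Sr_child {V} (E : V -> V -> Prop) root lam h v x :
  rooted_directed_tree E root -> E v x -> Sr E lam h x = lam x * h v.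
Proof. intros HT H. unfold Sr. rewrite (parent_some E root v x); auto. Qed.

Lemma Sr_root {V} (E : V -> V -> Prop) root lam h :
  rooted_directed_tree E root -> Sr E lam h root = 0.
Proof. intros HT. unfold Sr. rewrite parent_root; auto. Qed.

Lemma cw_1 n : cw 1 n = 1.
Proof. unfold cw. pose proof (pos_INR n). field. lra. Qed.

Lemma lam1 {V} (E : V -> V -> Prop) root (HT : rooted_directed_tree E root) (Hlf : locally_finite E) lam v u :
  dirichlet_weights E root 1 lam -> E v u -> lam u = / sqrt (INR (length (ch E Hlf v))).
Proof. intros Hw H. rewrite (lam_child E root HT Hlf 1 lam v u Hw H), cw_1, sqrt_1. ring. Qed.

Lemma lam1_sq {V} (E : V -> V -> Prop) root (HT : rooted_directed_tree E root) (Hlf : locally_finite E) lam v u :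
  leafless E -> dirichlet_weights E root 1 lam -> E v u -> lam u * lam u = / INR (length (ch E Hlf v)).
Proof. intros Hl Hw H. rewrite (lam_sq E root HT Hlf 1 lam v u), cw_1; auto. unfold Rdiv; ring. lra. Qed.

Lemma sum_children {V} (E : V -> V -> Prop) (Hlf : locally_finite E) root (F : V -> R) t :
  rsum F (Ld E Hlf root (S t)) = rsum (fun v => rsum F (ch E Hlf v)) (Ld E Hlf root t).
Proof. simpl. apply rsum_concat_map. Qed.

Definition ip {V} (E : V -> V -> Prop) (Hlf : locally_finite E) root t (f g : V -> R) : R :=
  rsum (fun x => f x * g x) (Ld E Hlf root t).

Lemma ip_Sr {V} (E : V -> V -> Prop) root (HT : rooted_directed_tree E root) (Hlf : locally_finite E) lam t f g :
  leafless E -> dirichlet_weights E root 1 lam ->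
  ip E Hlf root (S t) (Sr E lam f) (Sr E lam g) = ip E Hlf root t f g.
Proof.
  intros Hl Hw. unfold ip. rewrite sum_children. apply rsum_ext. intros v.
  rewrite (rsum_ext_in _ (fun u => (lam u * lam u) * (f v * g v))).
  rewrite rsum_scal_r, (lam_sq_sum E root HT Hlf 1 lam v), cw_1; auto. ring. lra.
  intros u Hu. apply ch_spec in Hu. rewrite !(Sr_child E root lam _ v u); auto. ring.
Qed.

Lemma sum_restrict_ch {V} (E : V -> V -> Prop) root (HT : rooted_directed_tree E root) (Hlf : locally_finite E) (F : V -> R) t v :
  In v (Ld E Hlf root t) -> (forall x, ~ In x (ch E Hlf v) -> F x = 0) ->
  rsum F (Ld E Hlf root (S t)) = rsum F (ch E Hlf v).
Proof.
  intros Hv HF. apply rsum_incl_eq. apply ch_nodup. apply (Ld_levels E root HT Hlf).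
  intros x Hx. apply ch_spec in Hx. eapply Ld_S_in; eauto.
  intros x _ Hx. auto.
Qed.

Definition hv {V} (E : V -> V -> Prop) (Hlf : locally_finite E) (v : V) (j : nat) (x : V) : R :=
  if dec (In x (ch E Hlf v)) then Hm j (idx x (ch E Hlf v)) else 0.

Lemma hv_out {V} (E : V -> V -> Prop) Hlf v j x : ~ In x (ch E Hlf v) -> hv E Hlf v j x = 0.
Proof. intros H. unfold hv. destruct (dec _); tauto. Qed.

Lemma hv_in {V} (E : V -> V -> Prop) Hlf v j x : In x (ch E Hlf v) -> hv E Hlf v j x = Hm j (idx x (ch E Hlf v)).
Proof. intros H. unfold hv. destruct (dec _); tauto. Qed.

Lemma hv_perp {V} (E : V -> V -> Prop) root (HT : rooted_directed_tree E root) (Hlf : locally_finite E) t v j (c : V -> R) c0 :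
  In v (Ld E Hlf root t) -> (1 <= j)%nat -> (j < length (ch E Hlf v))%nat ->
  (forall x, In x (ch E Hlf v) -> c x = c0) ->
  rsum (fun x => c x * hv E Hlf v j x) (Ld E Hlf root (S t)) = 0.
Proof.
  intros Hv Hj1 Hj2 Hc. rewrite (sum_restrict_ch E root HT Hlf _ t v); auto.
  rewrite (rsum_ext_in _ (fun x => c0 * Hm j (idx x (ch E Hlf v)))).
  rewrite rsum_scal_l, (rsum_idx (Hm j)), Hm_sum; auto. ring. apply ch_nodup.
  intros x Hx. rewrite Hc, hv_in; auto.
  intros x Hx. rewrite hv_out; auto. ring.
Qed.

Definition vec {V} (E : V -> V -> Prop) (Hlf : locally_finite E) (root : V) (l : option (V * nat)) : V -> R :=
  match l with
  | None => fun x => if dec (x = root) then 1 else 0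
  | Some (v, j) => hv E Hlf v j
  end.

Definition lvl {V} (E : V -> V -> Prop) root (HT : rooted_directed_tree E root) (l : option (V * nat)) : nat :=
  match l with None => 0%nat | Some (v, _) => S (dep E root HT v) end.

Definition valid {V} (E : V -> V -> Prop) (Hlf : locally_finite E) (l : option (V * nat)) : Prop :=
  match l with None => True | Some (v, j) => (1 <= j)%nat /\ (j < length (ch E Hlf v))%nat end.

Definition bv {V} (E : V -> V -> Prop) root (HT : rooted_directed_tree E root) (Hlf : locally_finite E) lam t l : V -> R :=
  Nat.iter (t - lvl E root HT l) (Sr E lam) (vec E Hlf root l).

Lemma bv_old {V} (E : V -> V -> Prop) root HT (Hlf : locally_finite E) lam t l :
  (lvl E root HT l <= t)%nat -> bv E root HT Hlf lam (S t) l = Sr E lam (bv E root HT Hlf lam t l).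
Proof. intros H. unfold bv. replace (S t - lvl E root HT l)%nat with (S (t - lvl E root HT l)) by lia. reflexivity. Qed.

Lemma bv_new {V} (E : V -> V -> Prop) root HT (Hlf : locally_finite E) lam t l :
  lvl E root HT l = t -> bv E root HT Hlf lam t l = vec E Hlf root l.
Proof. intros H. unfold bv. rewrite H, Nat.sub_diag. reflexivity. Qed.

Lemma Ld_parent {V} (E : V -> V -> Prop) (Hlf : locally_finite E) root t x :
  In x (Ld E Hlf root (S t)) -> exists v, In v (Ld E Hlf root t) /\ E v x.
Proof. simpl. rewrite in_concat_map. intros [v [Hv Hx]]. exists v. split; auto. apply (ch_spec E Hlf); auto. Qed.

Lemma hv_ip {V} (E : V -> V -> Prop) root (HT : rooted_directed_tree E root) (Hlf : locally_finite E) t v j w j' :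
  In v (Ld E Hlf root t) -> In w (Ld E Hlf root t) ->
  (1 <= j)%nat -> (j < length (ch E Hlf v))%nat -> (1 <= j')%nat -> (j' < length (ch E Hlf w))%nat ->
  ip E Hlf root (S t) (hv E Hlf v j) (hv E Hlf w j') = delta (Some (v, j)) (Some (w, j')).
Proof.
  intros Hv Hw Hj1 Hj2 Hj1' Hj2'. unfold ip. destruct (dec (v = w)).
  - subst w. rewrite (sum_restrict_ch E root HT Hlf _ t v); auto.
    rewrite (rsum_ext_in _ (fun x => Hm j (idx x (ch E Hlf v)) * Hm j' (idx x (ch E Hlf v)))).
    rewrite (rsum_idx (fun a => Hm j a * Hm j' a)), Hm_ortho; auto. 2: apply ch_nodup.
    unfold delta. destruct (dec (j = j')) as [E1|E1], (dec (Some (v, j) = Some (v, j'))) as [E2|E2]; subst; auto; try congruence.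
    intros x Hx. rewrite !hv_in; auto.
    intros x Hx. rewrite hv_out; auto. ring.
  - rewrite delta_neq. apply rsum_zero. intros x _. unfold hv.
    destruct (dec (In x (ch E Hlf v))) as [Hi1|Hi1], (dec (In x (ch E Hlf w))) as [Hi2|Hi2]; try ring.
    exfalso. apply ch_spec in Hi1. apply ch_spec in Hi2. apply n. eapply parent_unique; eauto.
    intro H. inversion H. auto.
Qed.

Lemma ON {V} (E : V -> V -> Prop) root (HT : rooted_directed_tree E root) (Hlf : locally_finite E) lam :
  leafless E -> dirichlet_weights E root 1 lam ->
  forall t l l', valid E Hlf l -> valid E Hlf l' -> (lvl E root HT l <= t)%nat -> (lvl E root HT l' <= t)%nat ->
  ip E Hlf root t (bv E root HT Hlf lam t l) (bv E root HT Hlf lam t l') = delta l l'.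
Proof.
  intros Hl Hw t. induction t; intros l l' Hv Hv' Hlt Hlt'.
  - destruct l as [[v j]|]; simpl in Hlt; [lia|]. destruct l' as [[v' j']|]; simpl in Hlt'; [lia|].
    rewrite delta_refl. unfold ip, bv, vec; simpl. destruct (dec (root = root)); [|congruence].
    unfold rsum; simpl. ring.
  - assert (Hcross : forall l l', valid E Hlf l -> valid E Hlf l' -> (lvl E root HT l <= t)%nat ->
             lvl E root HT l' = S t ->
             ip E Hlf root (S t) (bv E root HT Hlf lam (S t) l) (bv E root HT Hlf lam (S t) l') = 0 /\ l <> l').
    { intros m m' Hm Hm' H1 H2. destruct m' as [[w j']|]; simpl in H2; [|lia].
      assert (Hdw : dep E root HT w = t) by (simpl in H2; lia). split.
      - rewrite (bv_old E root HT Hlf lam t m) by auto. rewrite (bv_new E root HT Hlf lam (S t) (Some (w, j'))) by auto.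
        unfold ip. simpl vec.
        assert (Hwt : In w (Ld E Hlf root t)) by (apply (Ld_levels E root HT Hlf); auto).
        apply (hv_perp E root HT Hlf t w j' _ (/ sqrt (INR (length (ch E Hlf w))) * bv E root HT Hlf lam t m w)); auto.
        apply Hm'. apply Hm'.
        intros x Hx. apply ch_spec in Hx. rewrite (Sr_child E root lam _ w x), (lam1 E root HT Hlf lam w x); auto.
      - intro; subst. simpl in H1. lia. }
    destruct (Nat.eq_dec (lvl E root HT l) (S t)) as [E1|E1], (Nat.eq_dec (lvl E root HT l') (S t)) as [E2|E2].
    + destruct l as [[v j]|]; simpl in E1; [|lia]. destruct l' as [[w j']|]; simpl in E2; [|lia].
      assert (H0 : dep E root HT v = t) by (simpl in E1; lia). assert (H1 : dep E root HT w = t) by (simpl in E2; lia).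
      rewrite !bv_new; auto. simpl vec.
      apply (hv_ip E root HT Hlf t v j w j'); try apply Hv; try apply Hv'; apply (Ld_levels E root HT Hlf); auto.
    + destruct (Hcross l' l) as [H1 H2]; auto. lia. rewrite delta_neq by auto.
      unfold ip in *. rewrite <- H1. apply rsum_ext; intros; ring.
    + destruct (Hcross l l') as [H1 H2]; auto. lia. rewrite delta_neq by auto. auto.
    + rewrite !bv_old by lia. rewrite ip_Sr; auto. apply IHt; auto; lia.
Qed.

Definition NGL {V} (E : V -> V -> Prop) (Hlf : locally_finite E) root t : list (option (V * nat)) :=
  concat (map (fun v => map (fun j => Some (v, j)) (seq 1 (length (ch E Hlf v) - 1))) (Ld E Hlf root t)).

Lemma NGL_in {V} (E : V -> V -> Prop) root (HT : rooted_directed_tree E root) (Hlf : locally_finite E) t l :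
  In l (NGL E Hlf root t) <-> (valid E Hlf l /\ lvl E root HT l = S t).
Proof.
  unfold NGL. rewrite in_concat_map. destruct (Ld_levels E root HT Hlf) as [_ HL]. split.
  - intros [v [Hv Hl]]. apply in_map_iff in Hl. destruct Hl as [j [E1 Hj]]. subst. apply in_seq in Hj.
    simpl. split. lia. apply HL in Hv. lia.
  - destruct l as [[v j]|]; simpl; [|lia]. intros [[H1 H2] H3]. exists v. split. apply HL. lia.
    apply in_map_iff. exists j. split; auto. apply in_seq. lia.
Qed.

Lemma NGL_nodup {V} (E : V -> V -> Prop) root (HT : rooted_directed_tree E root) (Hlf : locally_finite E) t :
  NoDup (NGL E Hlf root t).
Proof.
  unfold NGL. apply NoDup_concat_map. apply (Ld_levels E root HT Hlf).
  intros v _. apply Injective_map_NoDup. intros a b E1; inversion E1; auto. apply seq_NoDup.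
  intros a a' b _ _ Ha Ha'. apply in_map_iff in Ha, Ha'. destruct Ha as [j [E1 _]], Ha' as [j' [E2 _]].
  subst. inversion E2; auto.
Qed.

Lemma CP {V} (E : V -> V -> Prop) root (HT : rooted_directed_tree E root) (Hlf : locally_finite E) lam GL :
  leafless E -> dirichlet_weights E root 1 lam ->
  NoDup GL -> (forall l, In l GL <-> valid E Hlf l) ->
  forall t x x', In x (Ld E Hlf root t) -> In x' (Ld E Hlf root t) ->
  rsum (fun l => bv E root HT Hlf lam t l x * bv E root HT Hlf lam t l x')
       (filter (fun l => Nat.leb (lvl E root HT l) t) GL) = delta x x'.
Proof.
  intros Hl Hw HGn HGv t. induction t; intros x x' Hx Hx'.
  - simpl in Hx, Hx'. destruct Hx as [Hx|[]], Hx' as [Hx'|[]]. subst. rewrite delta_refl.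
    rewrite (rsum_same _ _ (None :: nil)).
    + unfold rsum; simpl. unfold bv, vec; simpl. destruct (dec _) as [_|Hc]; [ring|congruence].
    + apply NoDup_filter; auto.
    + repeat constructor. auto.
    + intros l. rewrite filter_In, HGv. destruct l as [[v j]|]; simpl; split; auto;
      try (intros [_ H]; discriminate); try (intros [H|[]]; discriminate).
  - destruct (Ld_parent E Hlf root t x Hx) as [px [Hpx Epx]].
    destruct (Ld_parent E Hlf root t x' Hx') as [px' [Hpx' Epx']].
    set (F := fun l => bv E root HT Hlf lam (S t) l x * bv E root HT Hlf lam (S t) l x').
    rewrite rsum_filter.
    rewrite (rsum_ext _ (fun l => (if Nat.leb (lvl E root HT l) t then F l else 0) +
                                  (if Nat.eqb (lvl E root HT l) (S t) then F l else 0))).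
    2: { intros l. destruct (Nat.leb (lvl E root HT l) (S t)) eqn:E1, (Nat.leb (lvl E root HT l) t) eqn:E2,
         (Nat.eqb (lvl E root HT l) (S t)) eqn:E3; try ring;
         apply Nat.leb_le in E1 || apply Nat.leb_gt in E1; apply Nat.leb_le in E2 || apply Nat.leb_gt in E2;
         apply Nat.eqb_eq in E3 || apply Nat.eqb_neq in E3; lia. }
    rewrite rsum_plus, <- !rsum_filter.
    assert (Hold : rsum F (filter (fun l => Nat.leb (lvl E root HT l) t) GL) = lam x * lam x' * delta px px').
    { rewrite <- (IHt px px'); auto. rewrite <- rsum_scal_l. apply rsum_ext_in. intros l Hl0.
      apply filter_In in Hl0. destruct Hl0 as [_ Hl0]. apply Nat.leb_le in Hl0.
      unfold F. rewrite !bv_old by auto. rewrite (Sr_child E root lam _ px x), (Sr_child E root lam _ px' x'); auto. ring. }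
    assert (Hnew : rsum F (filter (fun l => Nat.eqb (lvl E root HT l) (S t)) GL) =
                   rsum (fun w => rsum (fun j => hv E Hlf w j x * hv E Hlf w j x') (seq 1 (length (ch E Hlf w) - 1))) (Ld E Hlf root t)).
    { rewrite (rsum_same _ _ (NGL E Hlf root t)).
      - unfold NGL. rewrite rsum_concat_map. apply rsum_ext_in. intros w Hw0. rewrite rsum_map. apply rsum_ext. intros j.
        assert (Hdw : dep E root HT w = t) by (apply (Ld_levels E root HT Hlf); auto).
        unfold F. rewrite !bv_new by (simpl; lia). reflexivity.
      - apply NoDup_filter; auto.
      - apply (NGL_nodup E root HT).
      - intros l. rewrite filter_In, HGv, (NGL_in E root HT). rewrite Nat.eqb_eq. tauto. }
    rewrite Hold, Hnew. destruct (dec (px = px')) as [Ep|Ep].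
    + subst px'. rewrite delta_refl.
      set (k := length (ch E Hlf px)).
      assert (Hk : (1 <= k)%nat) by (apply ch_len_pos; auto).
      assert (Hxc : In x (ch E Hlf px)) by (apply ch_spec; auto).
      assert (Hxc' : In x' (ch E Hlf px)) by (apply ch_spec; auto).
      rewrite (lam1 E root HT Hlf lam px x), (lam1 E root HT Hlf lam px x'); auto. fold k.
      assert (Hkp : 0 < INR k) by (apply lt_0_INR; lia).
      assert (Hsq : / sqrt (INR k) * / sqrt (INR k) * 1 = / INR k).
      { rewrite <- Rinv_mult, sqrt_sqrt; lra. }
      rewrite Hsq.
      rewrite (rsum_incl_eq _ (px :: nil)).
      * rewrite rsum_cons, rsum_nil.
        rewrite (rsum_ext_in _ (fun j => Hm j (idx x (ch E Hlf px)) * Hm j (idx x' (ch E Hlf px)))).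
        2: { intros j _. rewrite !hv_in; auto. }
        fold k. rewrite Rplus_0_r. replace k with (S (k - 1)) at 1 by lia.
        rewrite Hm_complete. 2,3: pose proof (idx_lt x (ch E Hlf px) Hxc); pose proof (idx_lt x' (ch E Hlf px) Hxc'); unfold k; lia.
        unfold delta. destruct (dec (idx x (ch E Hlf px) = idx x' (ch E Hlf px))) as [Ei|Ei], (dec (x = x')) as [Ex|Ex]; auto.
        exfalso; apply Ex; eapply idx_inj; eauto.
        exfalso; apply Ei; subst; auto.
      * repeat constructor; auto.
      * apply (Ld_levels E root HT Hlf).
      * intros z [Ez|[]]; subst; auto.
      * intros w Hw0 Hn. apply rsum_zero. intros j _. rewrite (hv_out E Hlf w j x). ring.
        intro Hc. apply ch_spec in Hc. apply Hn. left. apply (parent_unique E root px w x HT Epx Hc).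
    + rewrite delta_neq by auto. rewrite delta_neq.
      * rewrite rsum_zero. ring. intros w _. apply rsum_zero. intros j _. unfold hv.
        destruct (dec (In x (ch E Hlf w))) as [H1|H1], (dec (In x' (ch E Hlf w))) as [H2|H2]; try ring.
        exfalso. apply ch_spec in H1. apply ch_spec in H2. apply Ep.
        transitivity w. apply (parent_unique E root px w x HT Epx H1). apply (parent_unique E root w px' x' HT H2 Epx').
      * intro; subst. apply Ep. apply (parent_unique E root px px' x' HT Epx Epx').
Qed.

Lemma map_nth_filter {A} (l : list A) (d : A) (P : A -> bool) :
  map (fun i => nth i l d) (filter (fun i => P (nth i l d)) (seq 0 (length l))) = filter P l.
Proof.
  induction l as [|a l IH]. reflexivity.
  change (length (a :: l)) with (S (length l)). change (seq 0 (S (length l))) with (0%nat :: seq 1 (length l)).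
  rewrite <- seq_shift.
  change (filter (fun i => P (nth i (a :: l) d)) (0%nat :: map S (seq 0 (length l)))) with
    (if P a then 0%nat :: filter (fun i => P (nth i (a :: l) d)) (map S (seq 0 (length l)))
     else filter (fun i => P (nth i (a :: l) d)) (map S (seq 0 (length l)))).
  change (filter P (a :: l)) with (if P a then a :: filter P l else filter P l).
  assert (H : filter (fun i => P (nth i (a :: l) d)) (map S (seq 0 (length l))) =
              map S (filter (fun i => P (nth i l d)) (seq 0 (length l)))).
  { generalize (seq 0 (length l)). intros l0. induction l0 as [|b l0 IH0]. reflexivity.
    change (map S (b :: l0)) with (S b :: map S l0).
    change (filter (fun i => P (nth i (a :: l) d)) (S b :: map S l0)) with
      (if P (nth b l d) then S b :: filter (fun i => P (nth i (a :: l) d)) (map S l0) else filter (fun i => P (nth i (a :: l) d)) (map S l0)).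
    change (filter (fun i => P (nth i l d)) (b :: l0)) with
      (if P (nth b l d) then b :: filter (fun i => P (nth i l d)) l0 else filter (fun i => P (nth i l d)) l0).
    destruct (P (nth b l d)); rewrite IH0; reflexivity. }
  rewrite H. destruct (P a); [change (map ?f (0%nat :: ?r)) with (f 0%nat :: map f r)|]; rewrite map_map; rewrite <- IH; reflexivity.
Qed.

Definition GL {V} (E : V -> V -> Prop) (Hlf : locally_finite E) root (D : nat) : list (option (V * nat)) :=
  None :: concat (map (NGL E Hlf root) (seq 0 D)).

Lemma GL_props {V} (E : V -> V -> Prop) root (HT : rooted_directed_tree E root) (Hlf : locally_finite E) N :
  (forall v n, branching E v -> depth E root v n -> (n <= N)%nat) ->
  NoDup (GL E Hlf root (S N)) /\ (forall l, In l (GL E Hlf root (S N)) <-> valid E Hlf l).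
Proof.
  intros HN. split.
  - unfold GL. constructor.
    + intros Hin. apply in_concat_map in Hin. destruct Hin as [t [_ Ht]]. apply (NGL_in E root HT) in Ht. simpl in Ht. lia.
    + apply NoDup_concat_map. apply seq_NoDup. intros t _. apply (NGL_nodup E root HT).
      intros a a' b _ _ Ha Ha'. apply (NGL_in E root HT) in Ha. apply (NGL_in E root HT) in Ha'. lia.
  - intros l. unfold GL. split.
    + intros [E1|Hin]. subst; simpl; auto. apply in_concat_map in Hin. destruct Hin as [t [_ Ht]].
      apply (NGL_in E root HT) in Ht. apply Ht.
    + destruct l as [[v j]|]; intros H; [|left; auto]. right. apply in_concat_map.
      destruct H as [H1 H2]. exists (dep E root HT v). split.
      * apply in_seq. split. lia. simpl.
        assert (dep E root HT v <= N)%nat; [|lia]. apply (HN v). exists (length (ch E Hlf v)).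
        split. apply ch_card. lia. apply dep_spec.
      * apply (NGL_in E root HT). simpl. auto.
Qed.

Lemma fst_scal r z : fst (Cmul (RtoC r) z) = r * fst z.
Proof. rewrite Cmul_RtoC. reflexivity. Qed.
Lemma snd_scal r z : snd (Cmul (RtoC r) z) = r * snd z.
Proof. rewrite Cmul_RtoC. reflexivity. Qed.

Lemma shift_pair {V} (E : V -> V -> Prop) root (HT : rooted_directed_tree E root) (Hlf : locally_finite E)
  lam (proj : C -> R) h f s :
  leafless E -> dirichlet_weights E root 1 lam ->
  (forall r z, proj (Cmul (RtoC r) z) = r * proj z) ->
  rsum (fun x => Sr E lam h x * proj (weighted_shift E lam f x)) (Ld E Hlf root (S s)) =
  rsum (fun v => h v * proj (f v)) (Ld E Hlf root s).
Proof.
  intros Hl Hw Hp. rewrite sum_children. apply rsum_ext. intros v.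
  rewrite (rsum_ext_in _ (fun x => (lam x * lam x) * (h v * proj (f v)))).
  rewrite rsum_scal_r, (lam_sq_sum E root HT Hlf 1 lam v), cw_1; auto. ring. lra.
  intros x Hx. apply ch_spec in Hx. rewrite (Sr_child E root lam h v x), (ws_child E root lam f v x), Hp; auto. ring.
Qed.

Theorem q1_backward {V} (E : V -> V -> Prop) root lam
  (HT : rooted_directed_tree E root) (Hlf : locally_finite E) (Hleaf : leafless E)
  (Hfbi : finite_branching_index E root) (Hlam : dirichlet_weights E root 1 lam) :
  exists m : nat, (1 <= m)%nat /\
     unitarily_equivalent (weighted_shift E lam) (direct_sum m (classical_dirichlet 1)).
Proof.
  destruct Hfbi as [N HN].
  destruct (GL_props E root HT Hlf N HN) as [HGn HGv].
  set (G := GL E Hlf root (S N)) in *.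
  set (m := length G).
  assert (Hm : (0 < m)%nat) by (unfold m, G, GL; simpl; lia).
  exists m. split. lia.
  set (lab := fun i => nth i G None).
  set (mk := fun i : nat => match lt_dec i m with left H => exist (fun i => (i < m)%nat) i H | right _ => exist (fun i => (i < m)%nat) 0%nat Hm end).
  assert (Hmk : forall i, (i < m)%nat -> proj1_sig (mk i) = i).
  { intros i Hi. unfold mk. destruct (lt_dec i m); simpl; auto; lia. }
  assert (Hmk2 : forall j : {i : nat | (i < m)%nat}, mk (proj1_sig j) = j).
  { intros [j Hj]. unfold mk; simpl. destruct (lt_dec j m). f_equal; apply proof_irrelevance. lia. }
  set (lv := fun i => lvl E root HT (lab i)).
  set (ly := fun y : ({i : nat | (i < m)%nat} * nat) => (lv (proj1_sig (fst y)) + snd y)%nat).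
  set (Is := fun t => filter (fun i => Nat.leb (lv i) t) (seq 0 m)).
  set (LY := fun t => map (fun i => (mk i, (t - lv i)%nat)) (Is t)).
  set (K := fun (y : ({i : nat | (i < m)%nat} * nat)) (x : V) =>
              Nat.iter (snd y) (Sr E lam) (vec E Hlf root (lab (proj1_sig (fst y)))) x).
  assert (HIs : forall t i, In i (Is t) <-> (i < m)%nat /\ (lv i <= t)%nat).
  { intros t i. unfold Is. rewrite filter_In, in_seq, Nat.leb_le. split; intros; lia. }
  assert (HLY : is_levels ly LY).
  { split.
    - intros t. unfold LY. apply Injective_map_NoDup_in.
      + intros i i' Hi Hi' E1. apply HIs in Hi. apply HIs in Hi'. injection E1 as E2 E3.
        rewrite <- (Hmk i), <- (Hmk i') by tauto. rewrite E2. auto.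
      + apply NoDup_filter, seq_NoDup.
    - intros t [j n]. unfold LY, ly. rewrite in_map_iff. simpl fst; simpl snd. split.
      + intros [i [E1 Hi]]. injection E1 as E1 E2; subst. apply HIs in Hi. rewrite Hmk; lia.
      + intros H. exists (proj1_sig j). rewrite Hmk2. split. f_equal. lia. apply HIs. split. apply proj2_sig. lia. }
  assert (HK : forall t i, In i (Is t) -> K (mk i, (t - lv i)%nat) = bv E root HT Hlf lam t (lab i)).
  { intros t i Hi. apply HIs in Hi. unfold K, bv. simpl. rewrite Hmk by tauto. reflexivity. }
  assert (Hval : forall i, (i < m)%nat -> valid E Hlf (lab i)).
  { intros i Hi. apply HGv. apply nth_In. auto. }
  exists (Uop (Ld E Hlf root) ly K). split.
  - apply (U_unitary (dep E root HT) (Ld E Hlf root) ly LY K (Ld_levels E root HT Hlf) HLY).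
    + intros t x x' Hx Hx'. unfold LY. rewrite rsum_map.
      rewrite (rsum_ext_in _ (fun i => bv E root HT Hlf lam t (lab i) x * bv E root HT Hlf lam t (lab i) x')).
      2: { intros i Hi. rewrite HK; auto. }
      rewrite <- (rsum_map (fun l => bv E root HT Hlf lam t l x * bv E root HT Hlf lam t l x') lab).
      unfold Is, lv, m. unfold lab. rewrite (map_nth_filter G None (fun l => Nat.leb (lvl E root HT l) t)).
      apply CP; auto.
    + intros t y y' Hy Hy'. unfold LY in Hy, Hy'. apply in_map_iff in Hy. apply in_map_iff in Hy'.
      destruct Hy as [i [E1 Hi]], Hy' as [i' [E2 Hi']]. subst y y'.
      rewrite !HK by auto. change (ip E Hlf root t (bv E root HT Hlf lam t (lab i)) (bv E root HT Hlf lam t (lab i')) =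
        delta (mk i, (t - lv i)%nat) (mk i', (t - lv i')%nat)).
      apply HIs in Hi. apply HIs in Hi'.
      rewrite ON; auto; try apply Hval; try tauto.
      unfold delta. destruct (dec (lab i = lab i')) as [El|El], (dec ((mk i, (t - lv i)%nat) = (mk i', (t - lv i')%nat))) as [Ey|Ey]; auto.
      * exfalso. apply Ey. assert (i = i').
        { eapply (NoDup_nth G None); eauto; tauto. } subst; auto.
      * exfalso. apply El. injection Ey as Em Et. assert (i = i') by (rewrite <- (Hmk i), <- (Hmk i') by tauto; rewrite Em; auto).
        subst; auto.
  - intros f _ [j n]. unfold Uop, direct_sum. simpl fst. simpl snd.
    destruct n as [|n].
    + change (classical_dirichlet 1 (fun k => Uop (Ld E Hlf root) ly K f (j, k)) 0) with C0.
      unfold ly, K. simpl fst; simpl snd. rewrite Nat.add_0_r. simpl Nat.iter.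
      assert (Hj := Hval (proj1_sig j) (proj2_sig j)).
      unfold lv. destruct (lab (proj1_sig j)) as [[v jj]|] eqn:El.
      * simpl lvl. simpl vec. simpl in Hj. destruct Hj as [Hj1 Hj2].
        assert (Hv : In v (Ld E Hlf root (dep E root HT v))) by (apply (Ld_levels E root HT Hlf); auto).
        unfold C0. apply pair_eq; simpl.
        -- rewrite (rsum_ext _ (fun x => fst (weighted_shift E lam f x) * hv E Hlf v jj x)) by (intros; ring).
           apply (hv_perp E root HT Hlf _ v jj _ (/ sqrt (INR (length (ch E Hlf v))) * fst (f v))); auto.
           intros x Hx. apply ch_spec in Hx. rewrite (ws_child E root lam f v x), fst_scal, (lam1 E root HT Hlf lam v x); auto.
        -- rewrite (rsum_ext _ (fun x => snd (weighted_shift E lam f x) * hv E Hlf v jj x)) by (intros; ring).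
           apply (hv_perp E root HT Hlf _ v jj _ (/ sqrt (INR (length (ch E Hlf v))) * snd (f v))); auto.
           intros x Hx. apply ch_spec in Hx. rewrite (ws_child E root lam f v x), snd_scal, (lam1 E root HT Hlf lam v x); auto.
      * simpl lvl. simpl Ld. unfold rsum; simpl. rewrite ws_root; auto. unfold C0; apply pair_eq; simpl; ring.
    + unfold classical_dirichlet.
      replace ((INR n + 1) / (INR n + 1)) with 1 by (pose proof (pos_INR n); field; lra).
      rewrite sqrt_1, Cmul_1. apply pair_eq; simpl fst; simpl snd.
      * unfold ly; simpl fst; simpl snd. rewrite Nat.add_succ_r.
        apply (shift_pair E root HT Hlf lam fst); auto. apply fst_scal.
      * unfold ly; simpl fst; simpl snd. rewrite Nat.add_succ_r.
        apply (shift_pair E root HT Hlf lam snd); auto. apply snd_scal.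
Qed.


Theorem mainTheorem6 (V : Type) (E : V -> V -> Prop) (root : V) (q : R) (lam : V -> R)
  (HT : rooted_directed_tree E root) (Hlf : locally_finite E) (Hleaf : leafless E)
  (Hcount : countably_infinite V) (Hfbi : finite_branching_index E root)
  (Hq : 1 <= q) (Hlam : dirichlet_weights E root q lam) :
  (exists m : nat, (1 <= m)%nat /\
     unitarily_equivalent (weighted_shift E lam) (direct_sum m (classical_dirichlet q)))
  <-> (q = 1 \/ iso_to_nat E).
Proof.
  split.
  - intros H. destruct (Req_dec q 1) as [E1|E1]. left; auto. right.
    apply (forward E root q lam HT Hlf Hleaf); auto. lra.
  - intros [E1|Hiso].
    + subst q. apply (q1_backward E root lam HT Hlf Hleaf Hfbi Hlam).
    + apply (iso_backward E root q lam HT Hlf Hleaf Hq Hlam Hiso).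
Qed.
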